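(* Given $x \in \mathbb{T}^2$ and $i \in \{1,\dots,M\}$ such that $\mu(\Phi^{\overline{U}}(x,0,t^i_a+s)) \neq 0$ or $\mu(\Phi^{\overline{u}^{\star}(\cdot-S_i, \cdot)}(x+S_i,0,s)) \neq 0$ holds for at least one $s \in [0,T^{\star}]$, it holds \[ \Phi^{\overline{U}}(x,0,t^i_a+t) = \Phi^{\overline{u}^{\star}(\cdot-S_i, \cdot)}(x+S_i,0,t) \] for all $t \in [0, T^{\star}]$.
   Context: $\mathbb{T}^2=\mathbb{R}^2/2\pi\mathbb{Z}^2$, $\omega\subset\mathbb{T}^2$ nonempty open. $\Phi^v(x,s,t)$ denotes the flow of a vector field $v$: $\frac{d}{dt}\Phi^v(x,s,t)=v(\Phi^v(x,s,t),t)$, $\Phi^v(x,s,s)=x$. A length $L>0$ (depending on $\omega$) is fixed with: an open covering of $\mathbb{T}^2$ by squares $\mathcal{O}_1,\dots,\mathcal{O}_M$ of side $L$; an open square $\mathcal{O}$ with $\overline{\mathcal{O}}\subset\omega$ and shifts $S_i\in\mathbb{R}^2$ with $\mathcal{O}=\mathcal{O}_i+S_i$; a cutoff $\mu\in C^\infty(\mathbb{T}^2;[0,1])$ with $\operatorname{supp}\mu\subset\mathcal{O}$ and $\sum_i\mu(\cdot+S_i)=1$; a cutoff $\chi\in C^\infty(\mathbb{T}^2)$ with $\operatorname{supp}\chi\subset\omega$, $\chi=1$ near $\overline{\mathcal{O}}$; and times $T^\star=1/(3M+2)$ and $0<t^0_c<t^1_a<t^1_b<t^1_c<\dots<t^M_c<1$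 equidistant with spacing $T^\star$. $\overline{y}\in C_0^\infty((0,1);C^\infty(\mathbb{T}^2;\mathbb{R}^2))$ is a divergence-free field vanishing on $[t^i_a,t^i_b]$ for all $i$, whose flow satisfies $\Phi^{\overline{y}}(x,0,[t^i_a,t^i_b])=\{x+S_i\}$ whenever $\operatorname{dist}(x,\mathcal{O}_i)<L$, and which is odd-in-time about the midpoints of $[t^{i-1}_c,t^i_c]$. $\overline{u}^\star=\nabla^\perp\overline{\phi}^\star$ on $[0,T^\star]$ is a divergence-free field with stream function $\overline{\phi}^\star$ in $\operatorname{span}\{\sin x_1,\sin x_2,\cos x_1,\cos x_2\}$ at each time, time-reversal symmetric about $T^\star/2$, and so small (via a parameter $\kappa$) that there is $r\in(0,L)$ with $\chi=1$ on the $r$-neighborhood $\mathcal{N}_r$ of $\mathcal{O}$, $\mathcal{N}_r$ containing all flow images $\Phi^{\nabla^\perp[\chi\overline{\phi}^\star(\cdot-S,\cdot)]}(\operatorname{supp}\mu,s,t)$ and $\Phi^{\overline{u}^\star(\cdot-S,\cdot)}(\operatorname{supp}\mu,s,t)$ ($s,t\in[0,T^\star]$, $S\in\mathbb{R}^2$). Finally $\overline{U}(x,t)=\overline{y}(x,t)+\sum_{i=1}^M\mathbb{I}_{[t^i_a,t^i_b]}(t)\nabla^\perp[\chi(x)\overline{\phi}^\star(x-S_i,t-t^i_a)]$. *)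

(* Defs.v *)
(* The torus T^2 = R^2 / 2piZ^2 is modelled by its universal cover R*R:
   functions on T^2 are 2pi-periodic functions on R*R, subsets of T^2 are
   2pi-periodic predicates on R*R, flows are the lifted flows on R^2, and
   equality of points of T^2 is congruence modulo 2piZ^2 ([teq]). *)
From Stdlib Require Import Reals Lra.
From Coquelicot Require Import Coquelicot.
Open Scope R_scope.

Definition pt := (R * R)%type.
Definition padd (p q : pt) : pt := (fst p + fst q, snd p + snd q).
Definition psub (p q : pt) : pt := (fst p - fst q, snd p - snd q).
Definition pneg (p : pt) : pt := (- fst p, - snd p).
Definition pzero : pt := (0, 0).
Definition eucl (p : pt) : R := sqrt (fst p ^ 2 + snd p ^ 2).

Definition teq (p q : pt) : Prop :=
  exists k1 k2 : Z, fst p = fst q + 2 * PI * IZR k1 /\ snd p = snd q + 2 * PI * IZR k2.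

Definition periodic {A : Type} (f : pt -> A) : Prop :=
  forall x : pt, f (fst x + 2 * PI, snd x) = f x /\ f (fst x, snd x + 2 * PI) = f x.

Definition is_open (A : pt -> Prop) : Prop :=
  forall x, A x -> exists e, 0 < e /\ forall y, eucl (psub y x) < e -> A y.

Definition tsq (c : pt) (L : R) (x : pt) : Prop :=
  exists k1 k2 : Z,
    fst c < fst x + 2 * PI * IZR k1 < fst c + L /\
    snd c < snd x + 2 * PI * IZR k2 < snd c + L.
Definition tsq_cl (c : pt) (L : R) (x : pt) : Prop :=
  exists k1 k2 : Z,
    fst c <= fst x + 2 * PI * IZR k1 <= fst c + L /\
    snd c <= snd x + 2 * PI * IZR k2 <= snd c + L.

Definition nbhd (A : pt -> Prop) (r : R) (x : pt) : Prop :=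
  exists y, A y /\ eucl (psub x y) < r.

Definition supp (f : pt -> R) (x : pt) : Prop :=
  forall e, 0 < e -> exists y, eucl (psub y x) < e /\ f y <> 0.

Definition d1 (f : R -> R -> R -> R) : R -> R -> R -> R :=
  fun a b c => Derive (fun y => f y b c) a.
Definition d2 (f : R -> R -> R -> R) : R -> R -> R -> R :=
  fun a b c => Derive (fun y => f a y c) b.
Definition d3 (f : R -> R -> R -> R) : R -> R -> R -> R :=
  fun a b c => Derive (fun y => f a b y) c.

Definition cont3 (f : R -> R -> R -> R) : Prop :=
  forall a b c e, 0 < e -> exists d, 0 < d /\
    forall a' b' c', Rabs (a' - a) < d -> Rabs (b' - b) < d -> Rabs (c' - c) < d ->
      Rabs (f a' b' c' - f a b c) < e.

Fixpoint Ck (n : nat) (f : R -> R -> R -> R) : Prop :=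
  match n with
  | O => cont3 f
  | S n =>
      (forall a b c, ex_derive (fun y => f y b c) a /\ ex_derive (fun y => f a y c) b
                     /\ ex_derive (fun y => f a b y) c)
      /\ Ck n f /\ Ck n (d1 f) /\ Ck n (d2 f) /\ Ck n (d3 f)
  end.
Definition smooth3 (f : R -> R -> R -> R) : Prop := forall n, Ck n f.

Definition smooth_sp (f : pt -> R) : Prop := smooth3 (fun a b _ => f (a, b)).
Definition smooth_vf (v : pt -> R -> pt) : Prop :=
  smooth3 (fun a b t => fst (v (a, b) t)) /\ smooth3 (fun a b t => snd (v (a, b) t)).

Definition pd1 (f : pt -> R) (x : pt) : R := Derive (fun y => f (y, snd x)) (fst x).
Definition pd2 (f : pt -> R) (x : pt) : R := Derive (fun y => f (fst x, y)) (snd x).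
Definition perp_grad (f : pt -> R) (x : pt) : pt := (- pd2 f x, pd1 f x).

Definition div_free (v : pt -> R -> pt) : Prop :=
  forall x t, pd1 (fun y => fst (v y t)) x + pd2 (fun y => snd (v y t)) x = 0.

(* Phi is the flow of v on the time set I (Caratheodory / integral form):
   Phi x s t = x + int_s^t v (Phi x s tau) tau dtau, for s, t in I. *)
Definition IsFlowOn (I : R -> Prop) (v : pt -> R -> pt) (Phi : pt -> R -> R -> pt) : Prop :=
  forall x s t, I s -> I t ->
    is_RInt (fun tau => fst (v (Phi x s tau) tau)) s t (fst (Phi x s t) - fst x) /\
    is_RInt (fun tau => snd (v (Phi x s tau) tau)) s t (snd (Phi x s t) - snd x).

(* finite sums over i = 1..n *)
Fixpoint rsum (f : nat -> R) (n : nat) : R :=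
  match n with O => 0 | S m => rsum f m + f (S m) end.
Fixpoint vsum (f : nat -> pt) (n : nat) : pt :=
  match n with O => pzero | S m => padd (vsum f m) (f (S m)) end.

Definition Tstar (M : nat) : R := 1 / (3 * INR M + 2).
Definition t_a (M : nat) (t0 : R) (i : nat) : R := t0 + (3 * INR i - 2) * Tstar M.
Definition t_b (M : nat) (t0 : R) (i : nat) : R := t0 + (3 * INR i - 1) * Tstar M.
Definition t_c (M : nat) (t0 : R) (i : nat) : R := t0 + 3 * INR i * Tstar M.

Definition phistar (a1 a2 a3 a4 : R -> R) (x : pt) (t : R) : R :=
  a1 t * sin (fst x) + a2 t * sin (snd x) + a3 t * cos (fst x) + a4 t * cos (snd x).

Definition ustar_sh (a1 a2 a3 a4 : R -> R) (S : pt) (x : pt) (t : R) : pt :=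
  perp_grad (fun y => phistar a1 a2 a3 a4 (psub y S) t) x.
Definition chiu_sh (chi : pt -> R) (a1 a2 a3 a4 : R -> R) (S : pt) (x : pt) (t : R) : pt :=
  perp_grad (fun y => chi y * phistar a1 a2 a3 a4 (psub y S) t) x.

Definition indic (lo hi t : R) : R :=
  if Rle_dec lo t then (if Rle_dec t hi then 1 else 0) else 0.
Definition pscale (k : R) (p : pt) : pt := (k * fst p, k * snd p).

Definition Ubar (M : nat) (t0 : R) (ybar : pt -> R -> pt) (chi : pt -> R)
  (a1 a2 a3 a4 : R -> R) (Sh : nat -> pt) (x : pt) (t : R) : pt :=
  padd (ybar x t)
    (vsum (fun i => pscale (indic (t_a M t0 i) (t_b M t0 i) t)
                      (chiu_sh chi a1 a2 a3 a4 (Sh i) x (t - t_a M t0 i))) M).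

(* Main.v *)
Require Import Defs.
From Stdlib Require Import Reals.
From Coquelicot Require Import Coquelicot.
From Stdlib Require Import Lra ZArith Lia Classical.
Open Scope R_scope.

Definition nrm (p : pt) : R := Rabs (fst p) + Rabs (snd p).

Definition Sol (v : pt -> R -> pt) (X : R -> pt) (a b : R) : Prop :=
  forall s t, a <= s <= b -> a <= t <= b ->
    is_RInt (fun u => fst (v (X u) u)) s t (fst (X t) - fst (X s)) /\
    is_RInt (fun u => snd (v (X u) u)) s t (snd (X t) - snd (X s)).

Lemma flow_Sol I v Phi x s a b :
  IsFlowOn I v Phi -> I s -> (forall t, a <= t <= b -> I t) -> Sol v (Phi x s) a b.
Proof.
  intros HF Hs Hab s1 t1 H1 H2.
  destruct (HF x s s1 Hs (Hab _ H1)) as [A1 A2].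
  destruct (HF x s t1 Hs (Hab _ H2)) as [B1 B2].
  split.
  - replace (fst (Phi x s t1) - fst (Phi x s s1)) with
      (plus (opp (fst (Phi x s s1) - fst x)) (fst (Phi x s t1) - fst x))
      by (unfold plus, opp; simpl; ring).
    apply (@is_RInt_Chasles R_NormedModule _ s1 s t1); [apply (@is_RInt_swap R_NormedModule); exact A1 | exact B1].
  - replace (snd (Phi x s t1) - snd (Phi x s s1)) with
      (plus (opp (snd (Phi x s s1) - snd x)) (snd (Phi x s t1) - snd x))
      by (unfold plus, opp; simpl; ring).
    apply (@is_RInt_Chasles R_NormedModule _ s1 s t1); [apply (@is_RInt_swap R_NormedModule); exact A2 | exact B2].
Qed.

Lemma flow_init I v Phi x s : IsFlowOn I v Phi -> I s -> Phi x s s = x.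
Proof.
  intros HF Hs. destruct (HF x s s Hs Hs) as [A1 A2].
  pose proof (is_RInt_point (fun u => fst (v (Phi x s u) u)) s) as P1.
  pose proof (is_RInt_point (fun u => snd (v (Phi x s u) u)) s) as P2.
  apply (@is_RInt_unique R_CompleteNormedModule) in A1. apply (@is_RInt_unique R_CompleteNormedModule) in A2.
  apply (@is_RInt_unique R_CompleteNormedModule) in P1. apply (@is_RInt_unique R_CompleteNormedModule) in P2.
  rewrite P1 in A1. rewrite P2 in A2.
  unfold zero in A1, A2; simpl in A1, A2.
  destruct (Phi x s s); destruct x; simpl in *. f_equal; lra.
Qed.

Lemma RInt_abs_bound f s t l C :
  is_RInt f s t l -> (forall u, Rmin s t <= u <= Rmax s t -> Rabs (f u) <= C) ->
  Rabs l <= C * Rabs (t - s).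
Proof.
  intros H HC. destruct (Rle_dec s t) as [Hst|Hst].
  - pose proof (norm_RInt_le_const f s t l C Hst) as P.
    change (norm l) with (Rabs l) in P.
    rewrite (Rabs_right (t - s)) by lra.
    assert (Rabs l <= (t - s) * C). { apply P; [|exact H]. intros u Hu. apply HC.
      unfold Rmin, Rmax; destruct (Rle_dec s t); lra. }
    lra.
  - apply is_RInt_swap in H.
    pose proof (norm_RInt_le_const f t s (opp l) C) as P.
    change (norm (opp l)) with (Rabs (opp l)) in P.
    unfold opp in P; simpl in P. rewrite Rabs_Ropp in P.
    rewrite (Rabs_left (t - s)) by lra.
    assert (Rabs l <= (s - t) * C). { apply P; [lra| |exact H]. intros u Hu. apply HC.
      unfold Rmin, Rmax; destruct (Rle_dec s t); lra. }
    lra.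
Qed.

Lemma between_facts a b s u w :
  a <= s <= b -> a <= u <= b -> Rmin s u <= w <= Rmax s u ->
  a <= w <= b /\ Rabs (w - s) <= Rabs (u - s).
Proof.
  unfold Rmin, Rmax; destruct (Rle_dec s u); intros; split; try lra; split_Rabs; lra.
Qed.

Lemma halves C e : 0 < e -> exists n : nat, C / 2 ^ n < e.
Proof.
  intros He. destruct (INR_unbounded (C / e)) as [n Hn].
  exists n.
  assert (Hp : INR n <= 2 ^ n).
  { clear Hn. assert (forall m, INR m + 1 <= 2 ^ m).
    { induction m. simpl; lra. rewrite S_INR. simpl. pose proof (pos_INR m). lra. }
    specialize (H n). lra. }
  assert (H2 : 0 < 2 ^ n) by (apply pow_lt; lra).
  apply Rmult_lt_reg_r with (2 ^ n); [lra|].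
  replace (C / 2 ^ n * 2 ^ n) with C by (field; lra).
  assert (C < e * INR n).
  { assert (C / e * e < INR n * e) by (apply Rmult_lt_compat_r; lra).
    replace (C / e * e) with C in H by (field; lra). lra. }
  assert (e * INR n <= e * 2 ^ n) by (apply Rmult_le_compat_l; lra). lra.
Qed.

Lemma nrm_ge0 p : 0 <= nrm p.
Proof. unfold nrm. pose proof (Rabs_pos (fst p)); pose proof (Rabs_pos (snd p)); lra. Qed.

Lemma nrm0_eq p q : nrm (psub p q) <= 0 -> p = q.
Proof.
  destruct p as [p1 p2], q as [q1 q2]; unfold nrm, psub; simpl; intros H.
  pose proof (Rabs_pos (p1 - q1)); pose proof (Rabs_pos (p2 - q2)).
  assert (Rabs (p1 - q1) = 0) by lra. assert (Rabs (p2 - q2) = 0) by lra.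
  apply Rabs_eq_0 in H2. apply Rabs_eq_0 in H3. f_equal; lra.
Qed.

Section Uniq.
Variables (v : pt -> R -> pt) (X Y : R -> pt) (a b K B : R).
Hypothesis HK : 0 <= K.
Hypothesis Hlip : forall p q u, a <= u <= b -> nrm (psub (v p u) (v q u)) <= K * nrm (psub p q).
Hypothesis Hbd : forall p u, a <= u <= b -> nrm (v p u) <= B.
Hypothesis HX : Sol v X a b.
Hypothesis HY : Sol v Y a b.

Let h := / (4 * K + 4).
Lemma h_pos : 0 < h.
Proof. unfold h. apply Rinv_0_lt_compat. lra. Qed.
Lemma Kh : 2 * K * h <= / 2.
Proof. unfold h. apply Rmult_le_reg_r with (4 * K + 4). lra.
  rewrite Rmult_assoc, Rinv_l by lra. lra. Qed.

Lemma sol_move Z : Sol v Z a b -> forall s u, a <= s <= b -> a <= u <= b ->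
  Rabs (fst (Z u) - fst (Z s)) <= B * Rabs (u - s) /\
  Rabs (snd (Z u) - snd (Z s)) <= B * Rabs (u - s).
Proof.
  intros HZ s u Hs Hu. destruct (HZ s u Hs Hu) as [I1 I2]. split.
  - eapply RInt_abs_bound; [exact I1|]. intros w Hw.
    destruct (between_facts a b s u w Hs Hu Hw) as [Hw' _].
    pose proof (Hbd (Z w) w Hw'). unfold nrm in H. pose proof (Rabs_pos (snd (v (Z w) w))). lra.
  - eapply RInt_abs_bound; [exact I2|]. intros w Hw.
    destruct (between_facts a b s u w Hs Hu Hw) as [Hw' _].
    pose proof (Hbd (Z w) w Hw'). unfold nrm in H. pose proof (Rabs_pos (fst (v (Z w) w))). lra.
Qed.

Lemma local_uniq s : a <= s <= b -> X s = Y s ->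
  forall u, a <= u <= b -> Rabs (u - s) <= h -> X u = Y u.
Proof.
  intros Hs Heq.
  assert (Hn : forall n : nat, forall u, a <= u <= b -> Rabs (u - s) <= h ->
     nrm (psub (X u) (Y u)) <= 4 * B * h / 2 ^ n).
  { induction n; intros u Hu Hus.
    - simpl. unfold Rdiv. rewrite Rinv_1, Rmult_1_r.
      destruct (sol_move X HX s u Hs Hu) as [A1 A2].
      destruct (sol_move Y HY s u Hs Hu) as [B1 B2].
      rewrite Heq in A1, A2. unfold nrm, psub; simpl.
      assert (B * Rabs (u - s) <= B * h).
      { assert (0 <= B). { pose proof (Hbd (0,0) s Hs). pose proof (nrm_ge0 (v (0,0) s)). lra. }
        apply Rmult_le_compat_l; lra. }
      split_Rabs; lra.
    - destruct (HX s u Hs Hu) as [A1 A2]. destruct (HY s u Hs Hu) as [B1 B2].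
      pose proof (is_RInt_minus _ _ _ _ _ _ A1 B1) as D1.
      pose proof (is_RInt_minus _ _ _ _ _ _ A2 B2) as D2.
      set (C := 4 * B * h / 2 ^ n) in *.
      assert (HI : forall w, Rmin s u <= w <= Rmax s u ->
        nrm (psub (v (X w) w) (v (Y w) w)) <= K * C).
      { intros w Hw. destruct (between_facts a b s u w Hs Hu Hw) as [Hw1 Hw2].
        eapply Rle_trans. apply Hlip; exact Hw1.
        apply Rmult_le_compat_l; [lra|]. apply IHn; [exact Hw1| lra]. }
      assert (E1 : Rabs (minus (fst (X u) - fst (X s)) (fst (Y u) - fst (Y s))) <= K * C * Rabs (u - s)).
      { eapply RInt_abs_bound; [exact D1|]. intros w Hw. specialize (HI w Hw).
        unfold nrm, psub in HI; simpl in HI. unfold minus, plus, opp; simpl.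
        pose proof (Rabs_pos (snd (v (X w) w) - snd (v (Y w) w))). unfold Rminus in *. lra. }
      assert (E2 : Rabs (minus (snd (X u) - snd (X s)) (snd (Y u) - snd (Y s))) <= K * C * Rabs (u - s)).
      { eapply RInt_abs_bound; [exact D2|]. intros w Hw. specialize (HI w Hw).
        unfold nrm, psub in HI; simpl in HI. unfold minus, plus, opp; simpl.
        pose proof (Rabs_pos (fst (v (X w) w) - fst (v (Y w) w))). unfold Rminus in *. lra. }
      unfold minus, plus, opp in E1, E2; simpl in E1, E2. rewrite Heq in E1, E2.
      replace (fst (X u) - fst (Y s) + - (fst (Y u) - fst (Y s))) with (fst (X u) - fst (Y u)) in E1 by ring.
      replace (snd (X u) - snd (Y s) + - (snd (Y u) - snd (Y s))) with (snd (X u) - snd (Y u)) in E2 by ring.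
      assert (HC : 0 <= C).
      { unfold C. assert (0 <= B). { pose proof (Hbd (0,0) s Hs). pose proof (nrm_ge0 (v (0,0) s)). lra. }
        unfold Rdiv. apply Rmult_le_pos. pose proof h_pos. apply Rmult_le_pos; lra.
        left; apply Rinv_0_lt_compat, pow_lt; lra. }
      assert (K * C * Rabs (u - s) <= K * C * h) by (apply Rmult_le_compat_l; [apply Rmult_le_pos|]; lra).
      assert (2 * (K * C * h) <= C / 2).
      { pose proof Kh. replace (2 * (K * C * h)) with (C * (2 * K * h)) by ring.
        unfold Rdiv. apply Rmult_le_compat_l; lra. }
      replace (4 * B * h / 2 ^ S n) with (C / 2) by (unfold C; simpl; field; apply pow_nonzero; lra).
      unfold nrm, psub; simpl. lra. }
  intros u Hu Hus. apply nrm0_eq.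
  destruct (Rle_dec (nrm (psub (X u) (Y u))) 0) as [H|H]; [exact H|].
  exfalso. destruct (halves (4 * B * h) (nrm (psub (X u) (Y u)))) as [n Hn2]; [lra|].
  pose proof (Hn n u Hu Hus). lra.
Qed.

Lemma uniq_sol s0 : a <= s0 <= b -> X s0 = Y s0 -> forall t, a <= t <= b -> X t = Y t.
Proof.
  intros Hs0 Heq.
  assert (Hn : forall n : nat, forall t, a <= t <= b -> Rabs (t - s0) <= INR n * h -> X t = Y t).
  { induction n; intros t Ht Hts.
    - simpl in Hts. replace t with s0. exact Heq.
      assert (Rabs (t - s0) = 0) by (pose proof (Rabs_pos (t - s0)); lra).
      apply Rabs_eq_0 in H. lra.
    - rewrite S_INR in Hts. pose proof h_pos.
      destruct (Rle_dec (Rabs (t - s0)) (INR n * h)) as [Hle|Hle]; [apply IHn; auto|].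
      destruct (Rle_dec s0 t).
      + set (s := s0 + INR n * h).
        assert (Hs : a <= s <= b). { unfold s. apply Rnot_le_lt in Hle. rewrite Rabs_right in Hle by lra. pose proof (pos_INR n). assert (0 <= INR n * h) by (apply Rmult_le_pos; lra). lra. }
        apply (local_uniq s Hs). apply IHn; auto. unfold s. split_Rabs; pose proof (pos_INR n); nra.
        exact Ht. unfold s; split_Rabs; lra.
      + set (s := s0 - INR n * h).
        assert (Hs : a <= s <= b). { unfold s. apply Rnot_le_lt in Hle. rewrite Rabs_left in Hle by lra. pose proof (pos_INR n). assert (0 <= INR n * h) by (apply Rmult_le_pos; lra). lra. }
        apply (local_uniq s Hs). apply IHn; auto. unfold s. split_Rabs; pose proof (pos_INR n); nra.
        exact Ht. unfold s; split_Rabs; lra. }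
  intros t Ht. destruct (INR_unbounded ((b - a) / h)) as [n Hn3].
  apply (Hn n t Ht). pose proof h_pos.
  assert ((b - a) / h * h = b - a) by (field; lra).
  assert ((b - a) / h * h <= INR n * h) by (apply Rmult_le_compat_r; lra).
  split_Rabs; lra.
Qed.
End Uniq.

Lemma RInt_shift (f : R -> R) s t c l :
  is_RInt f (c + s) (c + t) l -> is_RInt (fun y => f (c + y)) s t l.
Proof.
  intros H. replace (c + s) with (1 * s + c) in H by ring.
  replace (c + t) with (1 * t + c) in H by ring.
  apply (is_RInt_comp_lin f 1 c s t l) in H.
  eapply is_RInt_ext; [|exact H]. intros y _. cbv beta. unfold scal; simpl; unfold mult; simpl.
  replace (1 * y + c) with (c + y) by ring. ring.
Qed.

Lemma RInt_refl (f : R -> R) s t m l :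
  is_RInt f (2 * m - s) (2 * m - t) l -> is_RInt (fun y => - f (2 * m - y)) s t l.
Proof.
  intros H. replace (2 * m - s) with (-1 * s + 2 * m) in H by ring.
  replace (2 * m - t) with (-1 * t + 2 * m) in H by ring.
  apply (is_RInt_comp_lin f (-1) (2 * m) s t l) in H.
  eapply is_RInt_ext; [|exact H]. intros y _. cbv beta.
  unfold scal; simpl; unfold mult; simpl.
  replace (-1 * y + 2 * m) with (2 * m - y) by ring. ring.
Qed.

Lemma Sol_ext v w X a b : Sol v X a b ->
  (forall u, a < u < b -> v (X u) u = w (X u) u) -> Sol w X a b.
Proof.
  intros H E s t Hs Ht. destruct (H s t Hs Ht) as [A1 A2]. split.
  - eapply is_RInt_ext; [|exact A1]. intros u Hu. cbv beta. rewrite E. reflexivity.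
    unfold Rmin, Rmax in Hu; destruct (Rle_dec s t); lra.
  - eapply is_RInt_ext; [|exact A2]. intros u Hu. cbv beta. rewrite E. reflexivity.
    unfold Rmin, Rmax in Hu; destruct (Rle_dec s t); lra.
Qed.

Lemma Sol_sub v X a b a' b' : Sol v X a b -> a <= a' -> b' <= b -> Sol v X a' b'.
Proof. intros H H1 H2 s t Hs Ht. apply H; lra. Qed.

Lemma Sol_shift v X a b c : Sol v X a b ->
  Sol (fun p u => v p (c + u)) (fun u => X (c + u)) (a - c) (b - c).
Proof.
  intros H s t Hs Ht. destruct (H (c + s) (c + t)) as [A1 A2]; try lra.
  split; apply RInt_shift with (f := fun u => _ (v (X u) u)); assumption.
Qed.

Lemma Sol_refl v X a b m : Sol v X a b ->
  Sol (fun p u => pneg (v p (2 * m - u))) (fun u => X (2 * m - u)) (2 * m - b) (2 * m - a).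
Proof.
  intros H s t Hs Ht. destruct (H (2 * m - s) (2 * m - t)) as [A1 A2]; try lra.
  apply RInt_refl in A1. apply RInt_refl in A2.
  split; unfold pneg; simpl; assumption.
Qed.

Lemma Sol_translate v X a b w : Sol v X a b ->
  (forall u, a <= u <= b -> v (padd (X u) w) u = v (X u) u) ->
  Sol v (fun u => padd (X u) w) a b.
Proof.
  intros H E s t Hs Ht. destruct (H s t Hs Ht) as [A1 A2]. unfold padd; simpl.
  replace (fst (X t) + fst w - (fst (X s) + fst w)) with (fst (X t) - fst (X s)) by ring.
  replace (snd (X t) + snd w - (snd (X s) + snd w)) with (snd (X t) - snd (X s)) by ring.
  split.
  - eapply is_RInt_ext; [|exact A1]. intros u Hu. cbv beta.
    change (fst (X u) + fst w, snd (X u) + snd w) with (padd (X u) w).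
    rewrite E. reflexivity. unfold Rmin, Rmax in Hu; destruct (Rle_dec s t); lra.
  - eapply is_RInt_ext; [|exact A2]. intros u Hu. cbv beta.
    change (fst (X u) + fst w, snd (X u) + snd w) with (padd (X u) w).
    rewrite E. reflexivity. unfold Rmin, Rmax in Hu; destruct (Rle_dec s t); lra.
Qed.

Definition LipBd (v : pt -> R -> pt) (a b : R) : Prop :=
  exists K B, 0 <= K /\
    (forall p q u, a <= u <= b -> nrm (psub (v p u) (v q u)) <= K * nrm (psub p q)) /\
    (forall p u, a <= u <= b -> nrm (v p u) <= B).

Lemma uniq v X Y a b : LipBd v a b -> Sol v X a b -> Sol v Y a b ->
  forall s0 t, a <= s0 <= b -> a <= t <= b -> X s0 = Y s0 -> X t = Y t.
Proof.
  intros [K [B [HK [HL HB]]]] HX HY s0 t Hs Ht E.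
  exact (uniq_sol v X Y a b K B HK HL HB HX HY s0 Hs E t Ht).
Qed.

Lemma LipBd_sub v a b a' b' : LipBd v a b -> a <= a' -> b' <= b -> LipBd v a' b'.
Proof.
  intros [K [B [HK [HL HB]]]] H1 H2. exists K, B. repeat split; auto.
  intros; apply HL; lra. intros; apply HB; lra.
Qed.

Lemma reversal v X m h : 0 <= h -> LipBd v (m - h) (m + h) -> Sol v X (m - h) (m + h) ->
  (forall p th, 0 < th < h -> v p (m + th) = pneg (v p (m - th))) ->
  X (m + h) = X (m - h).
Proof.
  intros Hh HL HX Hodd.
  pose proof (Sol_refl v X (m - h) (m + h) m HX) as HZ.
  replace (2 * m - (m + h)) with (m - h) in HZ by ring.
  replace (2 * m - (m - h)) with (m + h) in HZ by ring.
  assert (HZ' : Sol v (fun u => X (2 * m - u)) m (m + h)).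
  { apply Sol_ext with (v := fun p u => pneg (v p (2 * m - u))).
    apply Sol_sub with (m - h) (m + h); auto; lra.
    intros u Hu. set (th := u - m).
    replace u with (m + th) by (unfold th; ring).
    replace (2 * m - (m + th)) with (m - th) by ring.
    rewrite (Hodd _ th) by (unfold th; lra).
    unfold pneg; simpl. destruct (v (X (m - th)) (m - th)); simpl. f_equal; ring. }
  assert (E : X (m + h) = X (2 * m - (m + h))).
  { apply (uniq v X (fun u => X (2 * m - u)) m (m + h)) with (s0 := m).
    apply LipBd_sub with (m - h) (m + h); auto; lra.
    apply Sol_sub with (m - h) (m + h); auto; lra.
    exact HZ'. lra. lra. f_equal; ring. }
  rewrite E. f_equal; ring.
Qed.

Lemma glue (lo hi : R) (H : R -> R -> R -> Prop) :
  lo <= hi ->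
  (forall c d M d' M', H c d M -> 0 < d' <= d -> M <= M' -> H c d' M') ->
  (forall c, lo <= c <= hi -> exists d e M, 0 < d /\ 0 < e /\
      forall c', lo <= c' <= hi -> Rabs (c' - c) < e -> H c' d M) ->
  exists d M, 0 < d /\ forall c, lo <= c <= hi -> H c d M.
Proof.
  intros Hlh Hmon Hloc.
  set (S := fun u => lo <= u <= hi /\ exists d M, 0 < d /\ forall c, lo <= c <= u -> H c d M).
  assert (S0 : S lo).
  { destruct (Hloc lo) as [d [e [M [Hd [He HH]]]]]; [lra|].
    split; [lra|]. exists d, M; split; auto. intros c Hc. apply HH; [lra|].
    replace (c - lo) with 0 by lra. rewrite Rabs_R0; lra. }
  assert (Sb : bound S) by (exists hi; intros u [Hu _]; lra).
  destruct (completeness S Sb (ex_intro _ lo S0)) as [s [Hub Hlub]].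
  assert (Hs1 : lo <= s) by (apply Hub; exact S0).
  assert (Hs2 : s <= hi) by (apply Hlub; intros u [Hu _]; lra).
  destruct (Hloc s) as [ds [es [Ms [Hds [Hes HHs]]]]]; [lra|].
  assert (Hu : exists u, S u /\ s - es < u).
  { apply NNPP. intros Hn. assert (s <= s - es); [|lra].
    apply Hlub. intros u Su. apply Rnot_lt_le. intros Hlt. apply Hn. exists u; auto. }
  destruct Hu as [u [[Hu1 [du [Mu [Hdu HHu]]]] Hsu]].
  set (u' := Rmin (s + es / 2) hi).
  assert (Su' : S u').
  { split. unfold u', Rmin; destruct (Rle_dec (s + es / 2) hi); lra.
    exists (Rmin du ds), (Rmax Mu Ms). split. apply Rmin_glb_lt; auto.
    intros c Hc. destruct (Rle_dec c u).
    - apply Hmon with du Mu. apply HHu; lra.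
      split. apply Rmin_glb_lt; auto. apply Rmin_l. apply Rmax_l.
    - apply Hmon with ds Ms. apply HHs.
      unfold u', Rmin in Hc; destruct (Rle_dec (s + es / 2) hi); lra.
      unfold u', Rmin in Hc; destruct (Rle_dec (s + es / 2) hi); split_Rabs; lra.
      split. apply Rmin_glb_lt; auto. apply Rmin_r. apply Rmax_r. }
  assert (Hu's : u' <= s) by (apply Hub; exact Su').
  assert (Eu : u' = hi).
  { unfold u' in *. unfold Rmin in *; destruct (Rle_dec (s + es / 2) hi); lra. }
  destruct Su' as [_ [d [M [Hd HH]]]]. exists d, M. split; auto.
  intros c Hc. apply HH. lra.
Qed.

Lemma box_bound f a0 a1 b0 b1 c0 c1 : cont3 f -> a0 <= a1 -> b0 <= b1 -> c0 <= c1 ->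
  exists M, forall a b c, a0 <= a <= a1 -> b0 <= b <= b1 -> c0 <= c <= c1 ->
    Rabs (f a b c) <= M.
Proof.
  intros Hf Ha Hb Hc.
  assert (L1 : forall a b, exists d M, 0 < d /\ forall c, c0 <= c <= c1 ->
     forall a' b', Rabs (a' - a) < d -> Rabs (b' - b) < d -> Rabs (f a' b' c) <= M).
  { intros a b. apply glue; auto.
    - intros c d M d' M' HH [Hd' Hdd] HM a' b' H1 H2. apply Rle_trans with M; [apply HH; lra|lra].
    - intros c _. destruct (Hf a b c 1) as [d [Hd Hd']]; [lra|].
      exists d, d, (Rabs (f a b c) + 1). split; [auto|split; [auto|]].
      intros c' _ Hc' a' b' H1 H2. specialize (Hd' a' b' c' H1 H2 Hc').
      split_Rabs; lra. }
  assert (L2 : forall a, exists d M, 0 < d /\ forall b, b0 <= b <= b1 ->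
     forall a', Rabs (a' - a) < d -> forall c, c0 <= c <= c1 -> Rabs (f a' b c) <= M).
  { intros a. apply glue; auto.
    - intros b d M d' M' HH [Hd' Hdd] HM a' H1 c Hc'. apply Rle_trans with M; [apply HH; auto; lra|lra].
    - intros b _. destruct (L1 a b) as [d [M [Hd HH]]].
      exists d, d, M. split; [auto|split; [auto|]].
      intros b' _ Hb' a' Ha' c Hc'. apply HH; auto. }
  destruct (glue a0 a1 (fun a d M => forall b, b0 <= b <= b1 -> forall c, c0 <= c <= c1 -> Rabs (f a b c) <= M))
    as [d [M [_ HM]]]; auto.
  - intros a d M d' M' HH _ HMM b Hb' c Hc'. apply Rle_trans with M; [apply HH; auto|lra].
  - intros a _. destruct (L2 a) as [d [M [Hd HH]]].
    exists 1, d, M. split; [lra|split; [auto|]].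
    intros a' _ Ha' b Hb' c Hc'. apply HH; auto.
  - exists M. intros a b c H1 H2 H3. apply HM; auto.
Qed.

Lemma per1_Z (g : R -> R) : (forall a, g (a + 2 * PI) = g a) ->
  forall k a, g (a + 2 * PI * IZR k) = g a.
Proof.
  intros Hg k. induction k using Z.peano_ind; intros a.
  - rewrite Rmult_0_r, Rplus_0_r. reflexivity.
  - rewrite succ_IZR. replace (a + 2 * PI * (IZR k + 1)) with ((a + 2 * PI * IZR k) + 2 * PI) by ring.
    rewrite Hg. apply IHk.
  - replace (IZR (Z.pred k)) with (IZR k - 1) by (unfold Z.pred; rewrite plus_IZR; simpl; ring).
    replace (a + 2 * PI * (IZR k - 1)) with ((a - 2 * PI) + 2 * PI * IZR k) by ring.
    rewrite IHk. rewrite <- (Hg (a - 2 * PI)). f_equal; ring.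
Qed.

Lemma reduce_Z a : exists k : Z, 0 <= a + 2 * PI * IZR k <= 2 * PI.
Proof.
  pose proof PI_RGT_0 as HP.
  destruct (archimed (a / (2 * PI))) as [H1 H2].
  exists (1 - up (a / (2 * PI)))%Z. rewrite minus_IZR.
  set (z := IZR (up (a / (2 * PI)))) in *.
  assert (E : a = a / (2 * PI) * (2 * PI)) by (field; lra).
  split.
  - assert (a / (2 * PI) * (2 * PI) >= (z - 1) * (2 * PI)) by (apply Rmult_ge_compat_r; lra). lra.
  - assert (a / (2 * PI) * (2 * PI) <= z * (2 * PI)) by (apply Rmult_le_compat_r; lra). lra.
Qed.

Definition Per3 (f : R -> R -> R -> R) : Prop :=
  forall a b c, f (a + 2 * PI) b c = f a b c /\ f a (b + 2 * PI) c = f a b c.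

Lemma per3_Z f : Per3 f -> forall k1 k2 a b c,
  f (a + 2 * PI * IZR k1) (b + 2 * PI * IZR k2) c = f a b c.
Proof.
  intros Hf k1 k2 a b c.
  rewrite (per1_Z (fun y => f y (b + 2 * PI * IZR k2) c)) by (intros; apply Hf).
  apply (per1_Z (fun y => f a y c)). intros; apply Hf.
Qed.

Lemma glob_bound f c0 c1 : cont3 f -> Per3 f -> c0 <= c1 ->
  exists M, 0 <= M /\ forall a b c, c0 <= c <= c1 -> Rabs (f a b c) <= M.
Proof.
  intros Hc Hp Hcc. pose proof PI_RGT_0.
  destruct (box_bound f 0 (2 * PI) 0 (2 * PI) c0 c1 Hc) as [M HM]; try lra.
  exists M. split.
  - eapply Rle_trans; [apply Rabs_pos|]. apply (HM 0 0 c0); lra.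
  - intros a b c Hcc'. destruct (reduce_Z a) as [k1 Hk1]. destruct (reduce_Z b) as [k2 Hk2].
    rewrite <- (per3_Z f Hp k1 k2). apply HM; auto.
Qed.

Lemma mvt_bound (g g' : R -> R) x y B :
  (forall z, Rmin x y <= z <= Rmax x y -> is_derive g z (g' z)) ->
  (forall z, Rmin x y <= z <= Rmax x y -> Rabs (g' z) <= B) ->
  Rabs (g x - g y) <= B * Rabs (x - y).
Proof.
  intros Hd Hb.
  destruct (MVT_abs g g' y x) as [z [Hz1 Hz2]].
  { intros z Hz. apply is_derive_Reals. apply Hd. rewrite Rmin_comm, Rmax_comm. exact Hz. }
  rewrite Hz1. apply Rmult_le_compat_r. apply Rabs_pos. apply Hb.
  rewrite Rmin_comm, Rmax_comm. exact Hz2.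
Qed.

Lemma abs_sub_le x y : Rabs (x - y) <= Rabs x + Rabs y.
Proof. split_Rabs; lra. Qed.

Lemma glob_lip f c0 c1 : Ck 1 f -> Per3 f -> c0 <= c1 ->
  exists K, 0 <= K /\ forall a b a' b' c, c0 <= c <= c1 ->
    Rabs (f a b c - f a' b' c) <= K * (Rabs (a - a') + Rabs (b - b')).
Proof.
  intros [Hder [H0 [H1 [H2 _]]]] Hp Hcc. pose proof PI_RGT_0.
  destruct (glob_bound f c0 c1 H0 Hp Hcc) as [B0 [HB0 HB0']].
  destruct (box_bound (Defs.d1 f) (-1) (2 * PI + 1) (-1) (2 * PI + 1) c0 c1 H1) as [B1 HB1]; try lra.
  destruct (box_bound (Defs.d2 f) (-1) (2 * PI + 1) (-1) (2 * PI + 1) c0 c1 H2) as [B2 HB2]; try lra.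
  assert (B1p : 0 <= B1) by (eapply Rle_trans; [apply Rabs_pos| apply (HB1 0 0 c0); lra]).
  assert (B2p : 0 <= B2) by (eapply Rle_trans; [apply Rabs_pos| apply (HB2 0 0 c0); lra]).
  exists (B1 + B2 + 2 * B0). split; [lra|].
  intros a b a' b' c Hc.
  pose proof (Rabs_pos (a - a')) as P1. pose proof (Rabs_pos (b - b')) as P2.
  destruct (Rle_dec 1 (Rabs (a - a') + Rabs (b - b'))) as [Hbig|Hsm].
  - pose proof (HB0' a b c Hc). pose proof (HB0' a' b' c Hc).
    pose proof (abs_sub_le (f a b c) (f a' b' c)).
    assert (2 * B0 <= 2 * B0 * (Rabs (a - a') + Rabs (b - b'))).
    { rewrite <- (Rmult_1_r (2 * B0)) at 1. apply Rmult_le_compat_l; lra. }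
    assert (0 <= B1 * (Rabs (a - a') + Rabs (b - b'))) by (apply Rmult_le_pos; lra).
    assert (0 <= B2 * (Rabs (a - a') + Rabs (b - b'))) by (apply Rmult_le_pos; lra).
    lra.
  - destruct (reduce_Z a) as [k1 Hk1]. destruct (reduce_Z b) as [k2 Hk2].
    rewrite <- (per3_Z f Hp k1 k2 a b c), <- (per3_Z f Hp k1 k2 a' b' c).
    set (A := a + 2 * PI * IZR k1) in *. set (A' := a' + 2 * PI * IZR k1).
    set (Bb := b + 2 * PI * IZR k2) in *. set (Bb' := b' + 2 * PI * IZR k2).
    assert (EA : A - A' = a - a') by (unfold A, A'; ring).
    assert (EB : Bb - Bb' = b - b') by (unfold Bb, Bb'; ring).
    assert (HA' : -1 <= A' <= 2 * PI + 1) by (assert (Hx : Rabs (A - A') < 1) by (rewrite EA; lra); apply Rabs_def2 in Hx; lra).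
    assert (HB' : -1 <= Bb' <= 2 * PI + 1) by (assert (Hx : Rabs (Bb - Bb') < 1) by (rewrite EB; lra); apply Rabs_def2 in Hx; lra).
    assert (S1 : Rabs (f A Bb c - f A' Bb c) <= B1 * Rabs (A - A')).
    { apply (mvt_bound (fun y => f y Bb c) (fun y => Defs.d1 f y Bb c) A A' B1).
      - intros z Hz. unfold Defs.d1. apply (Derive_correct (fun y => f y Bb c)). exact (proj1 (Hder z Bb c)).
      - intros z Hz. apply HB1; try lra. unfold Rmin, Rmax in Hz; destruct (Rle_dec A A'); lra. }
    assert (S2 : Rabs (f A' Bb c - f A' Bb' c) <= B2 * Rabs (Bb - Bb')).
    { apply (mvt_bound (fun y => f A' y c) (fun y => Defs.d2 f A' y c) Bb Bb' B2).
      - intros z Hz. unfold Defs.d2. apply (Derive_correct (fun y => f A' y c)). exact (proj1 (proj2 (Hder A' z c))).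
      - intros z Hz. apply HB2; try lra. unfold Rmin, Rmax in Hz; destruct (Rle_dec Bb Bb'); lra. }
    rewrite EA in S1. rewrite EB in S2.
    assert (B1 * Rabs (a - a') + B2 * Rabs (b - b') <= (B1 + B2 + 2 * B0) * (Rabs (a - a') + Rabs (b - b'))).
    { pose proof (Rmult_le_pos _ _ B2p P1). pose proof (Rmult_le_pos _ _ B1p P2).
      pose proof (Rmult_le_pos _ _ HB0 P1). pose proof (Rmult_le_pos _ _ HB0 P2). lra. }
    assert (Rabs (f A Bb c - f A' Bb' c) <= Rabs (f A Bb c - f A' Bb c) + Rabs (f A' Bb c - f A' Bb' c)).
    { replace (f A Bb c - f A' Bb' c) with ((f A Bb c - f A' Bb c) + (f A' Bb c - f A' Bb' c)) by ring. apply Rabs_triang. }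
    lra.
Qed.

Section Fields.
Variables (a1 a2 a3 a4 : R -> R).

Definition ph (S p : pt) (t : R) : R := phistar a1 a2 a3 a4 (psub p S) t.
Definition ph1 (S p : pt) (t : R) : R := a1 t * cos (fst p - fst S) - a3 t * sin (fst p - fst S).
Definition ph2 (S p : pt) (t : R) : R := a2 t * cos (snd p - snd S) - a4 t * sin (snd p - snd S).

Lemma ph_d1 S p t : is_derive (fun y => ph S (y, snd p) t) (fst p) (ph1 S p t).
Proof. unfold ph, ph1, phistar, psub; simpl. auto_derive; [trivial|unfold Rminus; ring]. Qed.
Lemma ph_d2 S p t : is_derive (fun y => ph S (fst p, y) t) (snd p) (ph2 S p t).
Proof. unfold ph, ph2, phistar, psub; simpl. auto_derive; [trivial|unfold Rminus; ring]. Qed.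

Lemma ust_form S p t : ustar_sh a1 a2 a3 a4 S p t = (- ph2 S p t, ph1 S p t).
Proof.
  unfold ustar_sh, perp_grad, pd1, pd2. f_equal; [f_equal|].
  - apply is_derive_unique. apply (ph_d2 S p t).
  - apply is_derive_unique. apply (ph_d1 S p t).
Qed.

Lemma chiu_form (chi : pt -> R) (S p : pt) (t : R) :
  (forall b, ex_derive (fun y => chi (y, b)) (fst p)) ->
  (forall a, ex_derive (fun y => chi (a, y)) (snd p)) ->
  chiu_sh chi a1 a2 a3 a4 S p t =
   (- (pd2 chi p * ph S p t + chi p * ph2 S p t), pd1 chi p * ph S p t + chi p * ph1 S p t).
Proof.
  intros E1 E2. unfold chiu_sh, perp_grad, pd1, pd2. f_equal; [f_equal|].
  - change (fun y => chi y * phistar a1 a2 a3 a4 (psub y S) t) with (fun y => chi y * ph S y t).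
    rewrite (Derive_mult (fun y => chi (fst p, y)) (fun y => ph S (fst p, y) t)).
    replace (Derive (fun y => ph S (fst p, y) t) (snd p)) with (ph2 S p t) by (symmetry; apply is_derive_unique; apply ph_d2). destruct p; reflexivity.
    apply E2. eexists; apply ph_d2.
  - change (fun y => chi y * phistar a1 a2 a3 a4 (psub y S) t) with (fun y => chi y * ph S y t).
    rewrite (Derive_mult (fun y => chi (y, snd p)) (fun y => ph S (y, snd p) t)).
    replace (Derive (fun y => ph S (y, snd p) t) (fst p)) with (ph1 S p t) by (symmetry; apply is_derive_unique; apply ph_d1). destruct p; reflexivity.
    apply E1. eexists; apply ph_d1.
Qed.
End Fields.

Definition LB (F : pt -> R) (L B : R) : Prop :=
  0 <= L /\ 0 <= B /\ (forall p, Rabs (F p) <= B) /\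
  (forall p q, Rabs (F p - F q) <= L * nrm (psub p q)).

Lemma LB_plus F G L1 B1 L2 B2 : LB F L1 B1 -> LB G L2 B2 ->
  LB (fun p => F p + G p) (L1 + L2) (B1 + B2).
Proof.
  intros [h1 [h2 [h3 h4]]] [g1 [g2 [g3 g4]]]. split; [lra|split; [lra|split]].
  - intros p. eapply Rle_trans; [apply Rabs_triang|]. specialize (h3 p); specialize (g3 p); lra.
  - intros p q. replace (F p + G p - (F q + G q)) with ((F p - F q) + (G p - G q)) by ring.
    eapply Rle_trans; [apply Rabs_triang|]. specialize (h4 p q); specialize (g4 p q); lra.
Qed.

Lemma LB_opp F L B : LB F L B -> LB (fun p => - F p) L B.
Proof.
  intros [h1 [h2 [h3 h4]]]. split; [lra|split; [lra|split]].
  - intros p. rewrite Rabs_Ropp. auto.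
  - intros p q. replace (- F p - - F q) with (- (F p - F q)) by ring. rewrite Rabs_Ropp. auto.
Qed.

Lemma LB_mult F G L1 B1 L2 B2 : LB F L1 B1 -> LB G L2 B2 ->
  LB (fun p => F p * G p) (B1 * L2 + B2 * L1) (B1 * B2).
Proof.
  intros [h1 [h2 [h3 h4]]] [g1 [g2 [g3 g4]]].
  split; [pose proof (Rmult_le_pos _ _ h2 g1); pose proof (Rmult_le_pos _ _ g2 h1); lra|].
  split; [apply Rmult_le_pos; lra|split].
  - intros p. rewrite Rabs_mult. apply Rmult_le_compat; try apply Rabs_pos; auto.
  - intros p q. replace (F p * G p - F q * G q) with (F p * (G p - G q) + G q * (F p - F q)) by ring.
    eapply Rle_trans; [apply Rabs_triang|]. rewrite !Rabs_mult.
    pose proof (nrm_ge0 (psub p q)).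
    assert (Rabs (F p) * Rabs (G p - G q) <= B1 * (L2 * nrm (psub p q))).
    { apply Rmult_le_compat; try apply Rabs_pos; auto. }
    assert (Rabs (G q) * Rabs (F p - F q) <= B2 * (L1 * nrm (psub p q))).
    { apply Rmult_le_compat; try apply Rabs_pos; auto. }
    lra.
Qed.

Lemma LB_ext F G L B : (forall p, F p = G p) -> LB F L B -> LB G L B.
Proof.
  intros E [h1 [h2 [h3 h4]]]. split; [lra|split; [lra|split]].
  intros p; rewrite <- E; auto. intros p q; rewrite <- !E; auto.
Qed.

Lemma sin_lip x y : Rabs (sin x - sin y) <= 1 * Rabs (x - y).
Proof.
  apply (mvt_bound sin cos). intros; apply is_derive_Reals, derivable_pt_lim_sin.
  intros. pose proof (COS_bound z). apply Rabs_le; lra.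
Qed.
Lemma cos_lip x y : Rabs (cos x - cos y) <= 1 * Rabs (x - y).
Proof.
  apply (mvt_bound cos (fun z => - sin z)). intros; apply is_derive_Reals, derivable_pt_lim_cos.
  intros. pose proof (SIN_bound z). apply Rabs_le; lra.
Qed.

Lemma LB_trig1 (c A s : R) (tr : R -> R) : Rabs c <= A ->
  (forall x, Rabs (tr x) <= 1) -> (forall x y, Rabs (tr x - tr y) <= 1 * Rabs (x - y)) ->
  LB (fun p => c * tr (fst p - s)) A A.
Proof.
  intros Hc Hb Hl. assert (0 <= A) by (eapply Rle_trans; [apply Rabs_pos|exact Hc]).
  split; [lra|split; [lra|split]].
  - intros p. rewrite Rabs_mult. specialize (Hb (fst p - s)).
    pose proof (Rmult_le_compat _ _ _ _ (Rabs_pos c) (Rabs_pos _) Hc Hb). lra.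
  - intros p q. rewrite <- Rmult_minus_distr_l, Rabs_mult.
    specialize (Hl (fst p - s) (fst q - s)).
    replace (fst p - s - (fst q - s)) with (fst p - fst q) in Hl by ring.
    unfold nrm, psub; simpl. pose proof (Rabs_pos (snd p - snd q)).
    assert (Rabs (c) * Rabs (tr (fst p - s) - tr (fst q - s)) <= A * (1 * Rabs (fst p - fst q))).
    { apply Rmult_le_compat; try apply Rabs_pos; auto. }
    pose proof (Rmult_le_pos _ _ H H0). lra.
Qed.

Lemma LB_trig2 (c A s : R) (tr : R -> R) : Rabs c <= A ->
  (forall x, Rabs (tr x) <= 1) -> (forall x y, Rabs (tr x - tr y) <= 1 * Rabs (x - y)) ->
  LB (fun p => c * tr (snd p - s)) A A.
Proof.
  intros Hc Hb Hl. assert (0 <= A) by (eapply Rle_trans; [apply Rabs_pos|exact Hc]).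
  split; [lra|split; [lra|split]].
  - intros p. rewrite Rabs_mult. specialize (Hb (snd p - s)).
    pose proof (Rmult_le_compat _ _ _ _ (Rabs_pos c) (Rabs_pos _) Hc Hb). lra.
  - intros p q. rewrite <- Rmult_minus_distr_l, Rabs_mult.
    specialize (Hl (snd p - s) (snd q - s)).
    replace (snd p - s - (snd q - s)) with (snd p - snd q) in Hl by ring.
    unfold nrm, psub; simpl. pose proof (Rabs_pos (fst p - fst q)).
    assert (Rabs (c) * Rabs (tr (snd p - s) - tr (snd q - s)) <= A * (1 * Rabs (snd p - snd q))).
    { apply Rmult_le_compat; try apply Rabs_pos; auto. }
    pose proof (Rmult_le_pos _ _ H H0). lra.
Qed.

Lemma sin_b x : Rabs (sin x) <= 1.
Proof. pose proof (SIN_bound x). apply Rabs_le; lra. Qed.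
Lemma cos_b x : Rabs (cos x) <= 1.
Proof. pose proof (COS_bound x). apply Rabs_le; lra. Qed.

Section PhB.
Variables (a1 a2 a3 a4 : R -> R) (A t : R).
Hypothesis HA : Rabs (a1 t) <= A /\ Rabs (a2 t) <= A /\ Rabs (a3 t) <= A /\ Rabs (a4 t) <= A.

Lemma LB_ph S : LB (fun p => ph a1 a2 a3 a4 S p t) (A + A + A + A) (A + A + A + A).
Proof.
  destruct HA as [h1 [h2 [h3 h4]]].
  eapply LB_ext; [|apply LB_plus; [apply LB_plus; [apply LB_plus|]|]].
  2: apply (LB_trig1 (a1 t) A (fst S) sin); auto using sin_b, sin_lip.
  2: apply (LB_trig2 (a2 t) A (snd S) sin); auto using sin_b, sin_lip.
  2: apply (LB_trig1 (a3 t) A (fst S) cos); auto using cos_b, cos_lip.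
  2: apply (LB_trig2 (a4 t) A (snd S) cos); auto using cos_b, cos_lip.
  intros p. unfold ph, phistar, psub. simpl. reflexivity.
Qed.

Lemma LB_ph1 S : LB (fun p => ph1 a1 a3 S p t) (A + A) (A + A).
Proof.
  destruct HA as [h1 [h2 [h3 h4]]].
  eapply LB_ext; [|apply LB_plus].
  2: apply (LB_trig1 (a1 t) A (fst S) cos); auto using cos_b, cos_lip.
  2: apply (LB_trig1 (- a3 t) A (fst S) sin); auto using sin_b, sin_lip; rewrite Rabs_Ropp; auto.
  intros p. unfold ph1. simpl. ring.
Qed.

Lemma LB_ph2 S : LB (fun p => ph2 a2 a4 S p t) (A + A) (A + A).
Proof.
  destruct HA as [h1 [h2 [h3 h4]]].
  eapply LB_ext; [|apply LB_plus].
  2: apply (LB_trig2 (a2 t) A (snd S) cos); auto using cos_b, cos_lip.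
  2: apply (LB_trig2 (- a4 t) A (snd S) sin); auto using sin_b, sin_lip; rewrite Rabs_Ropp; auto.
  intros p. unfold ph2. simpl. ring.
Qed.
End PhB.

Lemma vec_lip (v : pt -> pt) L1 B1 L2 B2 :
  LB (fun p => fst (v p)) L1 B1 -> LB (fun p => snd (v p)) L2 B2 ->
  (forall p q, nrm (psub (v p) (v q)) <= (L1 + L2) * nrm (psub p q)) /\
  (forall p, nrm (v p) <= B1 + B2).
Proof.
  intros [h1 [h2 [h3 h4]]] [g1 [g2 [g3 g4]]]. split.
  - intros p q. unfold nrm at 1, psub at 1. simpl. specialize (h4 p q). specialize (g4 p q). lra.
  - intros p. unfold nrm. specialize (h3 p). specialize (g3 p). lra.
Qed.

Lemma Derive_per g P x : (forall y, g (y + P) = g y) -> Derive g (x + P) = Derive g x.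
Proof. intros Hg. unfold Derive. f_equal. apply Lim_ext. intros h.
 replace (x + P + h) with ((x + h) + P) by ring. rewrite !Hg. reflexivity. Qed.

Lemma nrm_zero : nrm (psub pzero pzero) = 0.
Proof. unfold nrm, psub, pzero; simpl. rewrite Rminus_diag, Rabs_R0. ring. Qed.
Lemma nrm_pzero : nrm pzero = 0.
Proof. unfold nrm, pzero; simpl. rewrite Rabs_R0. ring. Qed.

Lemma LipBd_out v : LipBd v 0 1 ->
  (forall p u, (u < 0 \/ 1 < u) -> v p u = pzero) -> forall a b, LipBd v a b.
Proof.
  intros [K [B [HK [HL HB]]]] Hout a b.
  assert (HB0 : 0 <= B) by (eapply Rle_trans; [apply (nrm_ge0 (v pzero 0))|apply HB; lra]).
  exists K, B. split; [exact HK|split].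
  - intros p q u _. destruct (Rle_dec 0 u); [destruct (Rle_dec u 1)|].
    + apply HL; lra.
    + rewrite !Hout by lra. rewrite nrm_zero. pose proof (nrm_ge0 (psub p q)). apply Rmult_le_pos; lra.
    + rewrite !Hout by lra. rewrite nrm_zero. pose proof (nrm_ge0 (psub p q)). apply Rmult_le_pos; lra.
  - intros p u _. destruct (Rle_dec 0 u); [destruct (Rle_dec u 1)|].
    + apply HB; lra.
    + rewrite Hout by lra. rewrite nrm_pzero. lra.
    + rewrite Hout by lra. rewrite nrm_pzero. lra.
Qed.

Lemma vf_LipBd (v : pt -> R -> pt) c0 c1 : c0 <= c1 ->
  Ck 1 (fun a b t => fst (v (a, b) t)) -> Ck 1 (fun a b t => snd (v (a, b) t)) ->
  (forall t, periodic (fun x => v x t)) -> LipBd v c0 c1.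
Proof.
  intros Hc H1 H2 Hp.
  assert (P1 : Per3 (fun a b t => fst (v (a, b) t))).
  { intros a b t. destruct (Hp t (a, b)) as [E1 E2]; simpl in *. rewrite E1, E2. auto. }
  assert (P2 : Per3 (fun a b t => snd (v (a, b) t))).
  { intros a b t. destruct (Hp t (a, b)) as [E1 E2]; simpl in *. rewrite E1, E2. auto. }
  destruct (glob_lip _ c0 c1 H1 P1 Hc) as [K1 [HK1 L1]].
  destruct (glob_lip _ c0 c1 H2 P2 Hc) as [K2 [HK2 L2]].
  destruct (glob_bound _ c0 c1 (proj1 (proj2 H1)) P1 Hc) as [B1 [HB1 G1]].
  destruct (glob_bound _ c0 c1 (proj1 (proj2 H2)) P2 Hc) as [B2 [HB2 G2]].
  exists (K1 + K2), (B1 + B2). split; [lra|split].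
  - intros [p1 p2] [q1 q2] u Hu. unfold nrm, psub; simpl.
    specialize (L1 p1 p2 q1 q2 u Hu). specialize (L2 p1 p2 q1 q2 u Hu). simpl in L1, L2. lra.
  - intros [p1 p2] u Hu. unfold nrm. specialize (G1 p1 p2 u Hu). specialize (G2 p1 p2 u Hu). lra.
Qed.

Lemma cont_bound (f : R -> R) a b : a <= b -> (forall t, continuous f t) ->
  exists A, forall t, a <= t <= b -> Rabs (f t) <= A.
Proof.
  intros Hab Hc.
  assert (Hc' : forall t, a <= t <= b -> continuity_pt f t) by (intros; apply continuity_pt_filterlim, Hc).
  destruct (continuity_ab_maj f a b Hab Hc') as [Mx [HM _]].
  destruct (continuity_ab_min f a b Hab Hc') as [mx [Hm _]].
  exists (Rabs (f Mx) + Rabs (f mx)). intros t Ht. specialize (HM t Ht). specialize (Hm t Ht).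
  apply Rabs_le. split_Rabs; lra.
Qed.

Section Chi.
Variable chi : pt -> R.
Hypothesis Hchi_smooth : smooth_sp chi.
Hypothesis Hchi_per : periodic chi.

Let fchi := fun (a b : R) (_ : R) => chi (a, b).

Lemma fchi_per : Per3 fchi.
Proof. intros a b c. unfold fchi. destruct (Hchi_per (a, b)) as [E1 E2]; simpl in *; auto. Qed.

Lemma d1fchi_per : Per3 (Defs.d1 fchi).
Proof.
  intros a b c. unfold Defs.d1, fchi. split.
  - apply (Derive_per (fun y => chi (y, b))). intros y. apply (proj1 (Hchi_per (y, b))).
  - apply Derive_ext. intros y. apply (proj2 (Hchi_per (y, b))).
Qed.

Lemma d2fchi_per : Per3 (Defs.d2 fchi).
Proof.
  intros a b c. unfold Defs.d2, fchi. split.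
  - apply Derive_ext. intros y. apply (proj1 (Hchi_per (a, y))).
  - apply (Derive_per (fun y => chi (a, y))). intros y. apply (proj2 (Hchi_per (a, y))).
Qed.

Lemma LB_of3 f : Ck 1 f -> Per3 f -> forall c, exists L B, LB (fun p => f (fst p) (snd p) c) L B.
Proof.
  intros H1 Hp c.
  destruct (glob_lip f c c H1 Hp (Rle_refl c)) as [K [HK HL]].
  destruct (glob_bound f c c (proj1 (proj2 H1)) Hp (Rle_refl c)) as [B [HB HG]].
  exists K, B. split; [auto|split; [auto|split]].
  - intros p. apply HG; lra.
  - intros p q. unfold nrm, psub; simpl. apply HL; lra.
Qed.

Lemma chi_LB : exists L B, LB chi L B.
Proof.
  destruct (LB_of3 fchi (Hchi_smooth 1%nat) fchi_per 0) as [L [B H]].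
  exists L, B. eapply LB_ext; [|exact H]. intros [p1 p2]; reflexivity.
Qed.

Lemma pd1_LB : exists L B, LB (pd1 chi) L B.
Proof.
  pose proof (Hchi_smooth 2%nat) as H2. destruct H2 as [_ [_ [H2 _]]].
  destruct (LB_of3 (Defs.d1 fchi) H2 d1fchi_per 0) as [L [B H]].
  exists L, B. eapply LB_ext; [|exact H]. intros [p1 p2]; reflexivity.
Qed.

Lemma pd2_LB : exists L B, LB (pd2 chi) L B.
Proof.
  pose proof (Hchi_smooth 2%nat) as H2. destruct H2 as [_ [_ [_ [H2 _]]]].
  destruct (LB_of3 (Defs.d2 fchi) H2 d2fchi_per 0) as [L [B H]].
  exists L, B. eapply LB_ext; [|exact H]. intros [p1 p2]; reflexivity.
Qed.

Lemma chi_exd1 (p : pt) (b : R) : ex_derive (fun y => chi (y, b)) (fst p).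
Proof. exact (proj1 (proj1 (Hchi_smooth 1%nat) (fst p) b 0)). Qed.
Lemma chi_exd2 (p : pt) (a : R) : ex_derive (fun y => chi (a, y)) (snd p).
Proof. exact (proj1 (proj2 (proj1 (Hchi_smooth 1%nat) a (snd p) 0))). Qed.

Variables (a1 a2 a3 a4 : R -> R) (T : R).
Hypothesis HT : 0 <= T.
Hypothesis Ha_cont : forall t, continuous a1 t /\ continuous a2 t /\ continuous a3 t /\ continuous a4 t.

Lemma a_bound : exists A, forall t, 0 <= t <= T ->
  Rabs (a1 t) <= A /\ Rabs (a2 t) <= A /\ Rabs (a3 t) <= A /\ Rabs (a4 t) <= A.
Proof.
  destruct (cont_bound a1 0 T HT (fun t => proj1 (Ha_cont t))) as [A1 H1].
  destruct (cont_bound a2 0 T HT (fun t => proj1 (proj2 (Ha_cont t)))) as [A2 H2].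
  destruct (cont_bound a3 0 T HT (fun t => proj1 (proj2 (proj2 (Ha_cont t))))) as [A3 H3].
  destruct (cont_bound a4 0 T HT (fun t => proj2 (proj2 (proj2 (Ha_cont t))))) as [A4 H4].
  exists (Rabs A1 + Rabs A2 + Rabs A3 + Rabs A4). intros t Ht.
  specialize (H1 t Ht); specialize (H2 t Ht); specialize (H3 t Ht); specialize (H4 t Ht).
  pose proof (Rle_abs A1); pose proof (Rle_abs A2); pose proof (Rle_abs A3); pose proof (Rle_abs A4).
  pose proof (Rabs_pos A1); pose proof (Rabs_pos A2); pose proof (Rabs_pos A3); pose proof (Rabs_pos A4).
  repeat split; lra.
Qed.

Lemma chiu_LipBd S : LipBd (chiu_sh chi a1 a2 a3 a4 S) 0 T.
Proof.
  destruct a_bound as [A HA].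
  destruct chi_LB as [Lc [Bc Hc]]. destruct pd1_LB as [L1 [B1 H1]]. destruct pd2_LB as [L2 [B2 H2]].
  assert (Hv : forall u, 0 <= u <= T ->
    (forall p q, nrm (psub (chiu_sh chi a1 a2 a3 a4 S p u) (chiu_sh chi a1 a2 a3 a4 S q u)) <=
       ((B2 * (A + A + A + A) + (A + A + A + A) * L2 + (Bc * (A + A) + (A + A) * Lc)) +
        (B1 * (A + A + A + A) + (A + A + A + A) * L1 + (Bc * (A + A) + (A + A) * Lc))) * nrm (psub p q)) /\
    (forall p, nrm (chiu_sh chi a1 a2 a3 a4 S p u) <=
       (B2 * (A + A + A + A) + Bc * (A + A)) + (B1 * (A + A + A + A) + Bc * (A + A)))).
  { intros u Hu. specialize (HA u Hu).
    apply vec_lip.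
    - eapply LB_ext; [|apply LB_opp, LB_plus; apply LB_mult; [exact H2|apply (LB_ph _ _ _ _ _ _ HA)|exact Hc|apply (LB_ph2 _ _ _ _ _ _ HA)]].
      intros p. rewrite chiu_form by (intros; first [apply chi_exd1|apply chi_exd2]). reflexivity.
    - eapply LB_ext; [|apply LB_plus; apply LB_mult; [exact H1|apply (LB_ph _ _ _ _ _ _ HA)|exact Hc|apply (LB_ph1 _ _ _ _ _ _ HA)]].
      intros p. rewrite chiu_form by (intros; first [apply chi_exd1|apply chi_exd2]). reflexivity. }
  eexists; eexists; split; [|split; intros; apply Hv; auto].
  destruct Hc as [? [? _]]. destruct H1 as [? [? _]]. destruct H2 as [? [? _]].
  assert (0 <= A) by (destruct (HA 0) as [h _]; [lra|]; eapply Rle_trans; [apply Rabs_pos|exact h]).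
  repeat first [apply Rplus_le_le_0_compat | apply Rmult_le_pos]; lra.
Qed.

Lemma ust_LipBd S : LipBd (ustar_sh a1 a2 a3 a4 S) 0 T.
Proof.
  destruct a_bound as [A HA].
  assert (Hv : forall u, 0 <= u <= T ->
    (forall p q, nrm (psub (ustar_sh a1 a2 a3 a4 S p u) (ustar_sh a1 a2 a3 a4 S q u)) <=
       ((A + A) + (A + A)) * nrm (psub p q)) /\
    (forall p, nrm (ustar_sh a1 a2 a3 a4 S p u) <= (A + A) + (A + A))).
  { intros u Hu. specialize (HA u Hu).
    apply vec_lip.
    - eapply LB_ext; [|apply LB_opp; apply (LB_ph2 _ _ _ _ _ _ HA)].
      intros p. rewrite ust_form. reflexivity.
    - eapply LB_ext; [|apply (LB_ph1 _ _ _ _ _ _ HA)].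
      intros p. rewrite ust_form. reflexivity. }
  eexists; eexists; split; [|split; intros; apply Hv; auto].
  assert (0 <= A) by (destruct (HA 0) as [h _]; [lra|]; eapply Rle_trans; [apply Rabs_pos|exact h]).
  lra.
Qed.
End Chi.

Lemma indic_in lo hi t : lo <= t <= hi -> indic lo hi t = 1.
Proof. intros H. unfold indic. destruct (Rle_dec lo t); [destruct (Rle_dec t hi)|]; lra. Qed.
Lemma indic_out lo hi t : ~ (lo <= t <= hi) -> indic lo hi t = 0.
Proof. intros H. unfold indic. destruct (Rle_dec lo t); [destruct (Rle_dec t hi)|]; auto; lra. Qed.

Lemma INR_lt1 k j : (k < j)%nat -> INR k + 1 <= INR j.
Proof. intros H. rewrite <- S_INR. apply le_INR. lia. Qed.

Lemma vsum_zero f n : (forall k, (1 <= k <= n)%nat -> fst (f k) = 0 /\ snd (f k) = 0) ->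
  vsum f n = pzero.
Proof.
  induction n; intros H; simpl; auto.
  rewrite IHn by (intros k Hk; apply H; lia). destruct (H (S n)) as [E1 E2]; [lia|].
  unfold padd, pzero; simpl. rewrite E1, E2. f_equal; ring.
Qed.

Lemma vsum_single f n i : (1 <= i <= n)%nat ->
  (forall k, (1 <= k <= n)%nat -> k <> i -> fst (f k) = 0 /\ snd (f k) = 0) ->
  vsum f n = (fst (f i), snd (f i)).
Proof.
  induction n; intros Hi H; [lia|]. simpl.
  destruct (Nat.eq_dec i (S n)) as [E|E].
  - subst i. rewrite vsum_zero by (intros k Hk; apply H; lia).
    unfold padd, pzero; simpl. f_equal; ring.
  - rewrite IHn by (try lia; intros k Hk Hki; apply H; lia).
    destruct (H (S n)) as [E1 E2]; [lia|auto|]. unfold padd; simpl. rewrite E1, E2. f_equal; ring.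
Qed.

Lemma vsum_odd f g n : (forall k, (1 <= k <= n)%nat -> f k = pneg (g k)) -> vsum f n = pneg (vsum g n).
Proof.
  induction n; intros H; simpl.
  - unfold pzero, pneg; simpl. f_equal; ring.
  - rewrite IHn by (intros k Hk; apply H; lia). rewrite (H (S n)) by lia.
    unfold padd, pneg; simpl. f_equal; ring.
Qed.

Lemma vsum_lip (f : nat -> pt -> R -> pt) n :
  (forall k, exists K B, 0 <= K /\ forall p q t, nrm (psub (f k p t) (f k q t)) <= K * nrm (psub p q) /\ nrm (f k p t) <= B) ->
  exists K B, 0 <= K /\ forall p q t, nrm (psub (vsum (fun k => f k p t) n) (vsum (fun k => f k q t) n)) <= K * nrm (psub p q)
     /\ nrm (vsum (fun k => f k p t) n) <= B.
Proof.
  intros H. induction n.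
  - exists 0, 0. split; [lra|]. intros p q t. simpl. rewrite nrm_zero, nrm_pzero. lra.
  - destruct IHn as [K1 [B1 [HK1 H1]]]. destruct (H (S n)) as [K2 [B2 [HK2 H2]]].
    exists (K1 + K2), (B1 + B2). split; [lra|]. intros p q t. simpl.
    destruct (H1 p q t) as [A1 A2]. destruct (H2 p q t) as [C1 C2].
    set (u := vsum (fun k => f k p t) n) in *. set (w := vsum (fun k => f k q t) n) in *.
    set (fp := f (S n) p t) in *. set (fq := f (S n) q t) in *.
    unfold nrm, psub, padd in *; simpl in *. split.
    + assert (Rabs (fst u + fst fp - (fst w + fst fq)) <= Rabs (fst u - fst w) + Rabs (fst fp - fst fq)).
      { replace (fst u + fst fp - (fst w + fst fq)) with ((fst u - fst w) + (fst fp - fst fq)) by ring. apply Rabs_triang. }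
      assert (Rabs (snd u + snd fp - (snd w + snd fq)) <= Rabs (snd u - snd w) + Rabs (snd fp - snd fq)).
      { replace (snd u + snd fp - (snd w + snd fq)) with ((snd u - snd w) + (snd fp - snd fq)) by ring. apply Rabs_triang. }
      lra.
    + pose proof (Rabs_triang (fst u) (fst fp)). pose proof (Rabs_triang (snd u) (snd fp)). lra.
Qed.

Lemma pscale1 v : pscale 1 v = v.
Proof. destruct v; unfold pscale; simpl; f_equal; ring. Qed.
Lemma pscale0 v : pscale 0 v = pzero.
Proof. destruct v; unfold pscale, pzero; simpl; f_equal; ring. Qed.

Lemma nrm_padd a b : nrm (padd a b) <= nrm a + nrm b.
Proof. unfold nrm, padd; simpl. pose proof (Rabs_triang (fst a) (fst b)). pose proof (Rabs_triang (snd a) (snd b)). lra. Qed.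
Lemma nrm_psub_padd a b c d : nrm (psub (padd a b) (padd c d)) <= nrm (psub a c) + nrm (psub b d).
Proof.
  unfold nrm, psub, padd; simpl.
  replace (fst a + fst b - (fst c + fst d)) with ((fst a - fst c) + (fst b - fst d)) by ring.
  replace (snd a + snd b - (snd c + snd d)) with ((snd a - snd c) + (snd b - snd d)) by ring.
  pose proof (Rabs_triang (fst a - fst c) (fst b - fst d)). pose proof (Rabs_triang (snd a - snd c) (snd b - snd d)). lra.
Qed.

Lemma T_pos M : 0 < Tstar M.
Proof. unfold Tstar. pose proof (pos_INR M). apply Rdiv_lt_0_compat; lra. Qed.

Lemma ta_lt M t0 k j : (k < j)%nat -> t_a M t0 k + 3 * Tstar M <= t_a M t0 j.
Proof.
  intros H. pose proof (INR_lt1 k j H). pose proof (T_pos M). unfold t_a.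
  assert (0 <= (INR j - INR k - 1) * Tstar M) by (apply Rmult_le_pos; lra). nra.
Qed.

Lemma tc_pred M t0 j : (1 <= j)%nat -> t_c M t0 (j - 1) = t_a M t0 j - Tstar M.
Proof. intros H. unfold t_c, t_a. rewrite minus_INR by lia. simpl. ring. Qed.

Lemma mid_eq M t0 j : (1 <= j)%nat -> (t_c M t0 (j - 1) + t_c M t0 j) / 2 = t_a M t0 j + Tstar M / 2.
Proof. intros H. rewrite tc_pred by auto. unfold t_c, t_a. field. Qed.

Section Main.
Variables (M : nat) (t0 : R) (ybar : pt -> R -> pt) (chi : pt -> R) (a1 a2 a3 a4 : R -> R) (Sh : nat -> pt).
Hypothesis Hy_smooth : smooth_vf ybar.
Hypothesis Hy_per : forall t, periodic (fun x => ybar x t).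
Hypothesis Hy_supp : exists e, 0 < e /\ forall x t, (t <= e \/ 1 - e <= t) -> ybar x t = pzero.
Hypothesis Hy_vanish : forall i, (1 <= i <= M)%nat -> forall x t,
     t_a M t0 i <= t <= t_b M t0 i -> ybar x t = pzero.
Hypothesis Hy_odd : forall i, (1 <= i <= M)%nat -> forall x tau,
     t_c M t0 (i - 1) <= (t_c M t0 (i - 1) + t_c M t0 i) / 2 - tau ->
     (t_c M t0 (i - 1) + t_c M t0 i) / 2 + tau <= t_c M t0 i ->
     ybar x ((t_c M t0 (i - 1) + t_c M t0 i) / 2 + tau)
     = pneg (ybar x ((t_c M t0 (i - 1) + t_c M t0 i) / 2 - tau)).
Hypothesis Ha_cont : forall t, continuous a1 t /\ continuous a2 t /\ continuous a3 t /\ continuous a4 t.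
Hypothesis Ha_rev : forall t, 0 <= t <= Tstar M ->
     a1 (Tstar M - t) = - a1 t /\ a2 (Tstar M - t) = - a2 t /\
     a3 (Tstar M - t) = - a3 t /\ a4 (Tstar M - t) = - a4 t.
Hypothesis Hchi_smooth : smooth_sp chi.
Hypothesis Hchi_per : periodic chi.

Let U := Ubar M t0 ybar chi a1 a2 a3 a4 Sh.
Let T := Tstar M.

Lemma yb_LipBd : forall a b, LipBd ybar a b.
Proof.
  apply LipBd_out.
  - apply vf_LipBd; [lra| apply (proj1 Hy_smooth 1%nat) | apply (proj2 Hy_smooth 1%nat) | exact Hy_per].
  - destruct Hy_supp as [e [He H]]. intros p u Hu. apply H. lra.
Qed.

Definition term k p t := pscale (indic (t_a M t0 k) (t_b M t0 k) t)
   (chiu_sh chi a1 a2 a3 a4 (Sh k) p (t - t_a M t0 k)).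

Lemma U_eq p t : U p t = padd (ybar p t) (vsum (fun k => term k p t) M).
Proof. reflexivity. Qed.

Lemma term_in k p t : t_a M t0 k <= t <= t_b M t0 k -> term k p t = chiu_sh chi a1 a2 a3 a4 (Sh k) p (t - t_a M t0 k).
Proof. intros H. unfold term. rewrite indic_in by auto. apply pscale1. Qed.
Lemma term_out k p t : ~ (t_a M t0 k <= t <= t_b M t0 k) -> term k p t = pzero.
Proof. intros H. unfold term. rewrite indic_out by auto. apply pscale0. Qed.

Lemma term_lip k : exists K B, 0 <= K /\ forall p q t,
  nrm (psub (term k p t) (term k q t)) <= K * nrm (psub p q) /\ nrm (term k p t) <= B.
Proof.
  pose proof (T_pos M).
  destruct (chiu_LipBd chi Hchi_smooth Hchi_per a1 a2 a3 a4 (Tstar M) ltac:(lra) Ha_cont (Sh k))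
    as [K [B [HK [HL HB]]]].
  assert (HB0 : 0 <= B) by (eapply Rle_trans; [apply nrm_ge0|apply (HB pzero 0); lra]).
  exists K, B. split; auto. intros p q t.
  destruct (Rle_dec (t_a M t0 k) t); [destruct (Rle_dec t (t_b M t0 k))|].
  - rewrite !term_in by lra. assert (0 <= t - t_a M t0 k <= Tstar M) by (unfold t_b in *; unfold t_a in *; lra).
    split; [apply HL|apply HB]; auto.
  - rewrite !term_out by lra. rewrite nrm_zero, nrm_pzero. split; [apply Rmult_le_pos; auto; apply nrm_ge0|lra].
  - rewrite !term_out by lra. rewrite nrm_zero, nrm_pzero. split; [apply Rmult_le_pos; auto; apply nrm_ge0|lra].
Qed.

Lemma U_LipBd a b : LipBd U a b.
Proof.
  destruct (yb_LipBd a b) as [K1 [B1 [HK1 [HL1 HB1]]]].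
  destruct (vsum_lip term M term_lip) as [K2 [B2 [HK2 H2]]].
  exists (K1 + K2), (B1 + B2). split; [lra|split].
  - intros p q u Hu. rewrite !U_eq. eapply Rle_trans; [apply nrm_psub_padd|].
    specialize (HL1 p q u Hu). destruct (H2 p q u) as [h _]. lra.
  - intros p u Hu. rewrite U_eq. eapply Rle_trans; [apply nrm_padd|].
    specialize (HB1 p u Hu). destruct (H2 p p u) as [_ h]. lra.
Qed.

Lemma U_gap p t : (forall k, (1 <= k <= M)%nat -> ~ (t_a M t0 k <= t <= t_b M t0 k)) -> U p t = ybar p t.
Proof.
  intros H. rewrite U_eq. rewrite vsum_zero.
  - destruct (ybar p t); unfold padd, pzero; simpl; f_equal; ring.
  - intros k Hk. rewrite term_out by auto. unfold pzero; simpl; auto.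
Qed.

Lemma U_bump i p tau : (1 <= i <= M)%nat -> 0 <= tau <= T ->
  U p (t_a M t0 i + tau) = chiu_sh chi a1 a2 a3 a4 (Sh i) p tau.
Proof.
  intros Hi Ht. pose proof (T_pos M). rewrite U_eq.
  rewrite (Hy_vanish i Hi) by (unfold t_b, T in *; unfold t_a in *; lra).
  rewrite (vsum_single _ M i Hi).
  - rewrite term_in by (unfold t_b, T in *; unfold t_a in *; lra).
    replace (t_a M t0 i + tau - t_a M t0 i) with tau by ring.
    destruct (chiu_sh chi a1 a2 a3 a4 (Sh i) p tau); unfold padd, pzero; simpl; f_equal; ring.
  - intros k Hk Hki. rewrite term_out. unfold pzero; simpl; auto.
    destruct (Nat.lt_ge_cases k i) as [Hlt|Hge].
    + pose proof (ta_lt M t0 k i Hlt). unfold t_b, T in *. unfold t_a in *. lra.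
    + assert (Hlt : (i < k)%nat) by lia. pose proof (ta_lt M t0 i k Hlt). unfold t_b, T in *. unfold t_a in *. lra.
Qed.

Lemma chiu_odd S p s : 0 <= s <= T ->
  chiu_sh chi a1 a2 a3 a4 S p (T - s) = pneg (chiu_sh chi a1 a2 a3 a4 S p s).
Proof.
  intros Hs. destruct (Ha_rev s Hs) as [e1 [e2 [e3 e4]]].
  rewrite !chiu_form by (intros; first [apply (chi_exd1 chi Hchi_smooth)|apply (chi_exd2 chi Hchi_smooth)]).
  unfold T in *. unfold ph, ph1, ph2, phistar, pneg. simpl. rewrite e1, e2, e3, e4. f_equal; ring.
Qed.

Lemma U_odd j p th : (1 <= j <= M)%nat -> 0 < th < 3 * T / 2 ->
  U p (t_a M t0 j + T / 2 + th) = pneg (U p (t_a M t0 j + T / 2 - th)).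
Proof.
  intros Hj Hth. pose proof (T_pos M). rewrite !U_eq.
  assert (Ey : ybar p (t_a M t0 j + T / 2 + th) = pneg (ybar p (t_a M t0 j + T / 2 - th))).
  { pose proof (Hy_odd j Hj p th) as Ho. rewrite (mid_eq M t0 j) in Ho by lia.
    apply Ho; rewrite ?tc_pred by lia; unfold t_c, T in *; unfold t_a in *; lra. }
  rewrite Ey. rewrite (vsum_odd _ (fun k => term k p (t_a M t0 j + T / 2 - th))).
  - destruct (ybar p (t_a M t0 j + T / 2 - th)), (vsum (fun k => term k p (t_a M t0 j + T / 2 - th)) M).
    unfold padd, pneg; simpl; f_equal; ring.
  - intros k Hk. destruct (Nat.eq_dec k j) as [E|E].
    + subst k. destruct (Rle_dec th (T / 2)).
      * rewrite !term_in by (unfold t_b, t_a, T in *; lra).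
        replace (t_a M t0 j + T / 2 + th - t_a M t0 j) with (T - (T / 2 - th)) by field.
        replace (t_a M t0 j + T / 2 - th - t_a M t0 j) with (T / 2 - th) by ring.
        apply chiu_odd. lra.
      * rewrite !term_out by (unfold t_b, t_a, T in *; lra). unfold pzero, pneg; simpl; f_equal; ring.
    + rewrite !term_out. unfold pzero, pneg; simpl; f_equal; ring.
      all: destruct (Nat.lt_ge_cases k j) as [Hlt|Hge];
        [pose proof (ta_lt M t0 k j Hlt); unfold t_b, T in *; unfold t_a in *; lra
        |assert (Hlt : (j < k)%nat) by lia; pose proof (ta_lt M t0 j k Hlt); unfold t_b, T in *; unfold t_a in *; lra].
Qed.

End Main.

Lemma abs_le_sqrt u v : Rabs v <= sqrt (u ^ 2 + v ^ 2).
Proof.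
  rewrite <- sqrt_Rsqr_abs. apply sqrt_le_1_alt. unfold Rsqr. simpl. nra.
Qed.

Lemma eucl_tri u v d : sqrt (u ^ 2 + (v + d) ^ 2) <= sqrt (u ^ 2 + v ^ 2) + Rabs d.
Proof.
  set (s := sqrt (u ^ 2 + v ^ 2)).
  assert (Hs : 0 <= s) by apply sqrt_pos.
  assert (Hs2 : s * s = u ^ 2 + v ^ 2) by (apply sqrt_sqrt; nra).
  assert (Hv : Rabs v <= s) by apply abs_le_sqrt.
  assert (Hd : 0 <= Rabs d) by apply Rabs_pos.
  rewrite <- (sqrt_Rsqr (s + Rabs d)) by lra. apply sqrt_le_1_alt. unfold Rsqr.
  assert (v * d <= Rabs v * Rabs d) by (rewrite <- Rabs_mult; apply Rle_abs).
  assert (Rabs v * Rabs d <= s * Rabs d) by (apply Rmult_le_compat_r; lra).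
  assert (Rabs d * Rabs d = d * d) by (rewrite <- Rabs_mult; apply Rabs_right; nra).
  simpl. nra.
Qed.

Lemma eucl_shift2 p z y : eucl (psub (fst p, y) z) <= eucl (psub p z) + Rabs (y - snd p).
Proof.
  unfold eucl, psub; simpl.
  replace (y - snd z) with ((snd p - snd z) + (y - snd p)) by ring. apply eucl_tri.
Qed.
Lemma eucl_shift1 p z y : eucl (psub (y, snd p) z) <= eucl (psub p z) + Rabs (y - fst p).
Proof.
  unfold eucl, psub; simpl.
  replace (y - fst z) with ((fst p - fst z) + (y - fst p)) by ring.
  rewrite (Rplus_comm ((fst p - fst z + (y - fst p)) ^ 2)), (Rplus_comm ((fst p - fst z) ^ 2)). apply eucl_tri.
Qed.

Lemma nb_open2 A r p : nbhd A r p -> exists rho, 0 < rho /\ forall y, Rabs (y - snd p) < rho -> nbhd A r (fst p, y).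
Proof.
  intros [z [Hz Hd]]. exists (r - eucl (psub p z)). split; [lra|].
  intros y Hy. exists z. split; auto. pose proof (eucl_shift2 p z y). lra.
Qed.
Lemma nb_open1 A r p : nbhd A r p -> exists rho, 0 < rho /\ forall y, Rabs (y - fst p) < rho -> nbhd A r (y, snd p).
Proof.
  intros [z [Hz Hd]]. exists (r - eucl (psub p z)). split; [lra|].
  intros y Hy. exists z. split; auto. pose proof (eucl_shift1 p z y). lra.
Qed.

Lemma nb_mono A r r' p : r <= r' -> nbhd A r p -> nbhd A r' p.
Proof. intros H [z [Hz Hd]]. exists z. split; auto. lra. Qed.

Definition zv (k1 k2 : Z) : pt := (2 * PI * IZR k1, 2 * PI * IZR k2).

Lemma nb_per c L r p k1 k2 : nbhd (tsq c L) r p -> nbhd (tsq c L) r (padd p (zv k1 k2)).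
Proof.
  intros [z [[m1 [m2 [H1 H2]]] Hd]]. exists (padd z (zv k1 k2)). split.
  - exists (m1 - k1)%Z, (m2 - k2)%Z. unfold padd, zv; simpl. rewrite !minus_IZR.
    split; lra.
  - unfold padd, zv, psub, eucl in *; simpl in *.
    replace (fst p + 2 * PI * IZR k1 - (fst z + 2 * PI * IZR k1)) with (fst p - fst z) by ring.
    replace (snd p + 2 * PI * IZR k2 - (snd z + 2 * PI * IZR k2)) with (snd p - snd z) by ring. auto.
Qed.

Lemma per1_Zt {A : Type} (g : R -> A) : (forall a, g (a + 2 * PI) = g a) ->
  forall k a, g (a + 2 * PI * IZR k) = g a.
Proof.
  intros Hg k. induction k using Z.peano_ind; intros a.
  - rewrite Rmult_0_r, Rplus_0_r. reflexivity.
  - rewrite succ_IZR. replace (a + 2 * PI * (IZR k + 1)) with ((a + 2 * PI * IZR k) + 2 * PI) by ring.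
    rewrite Hg. apply IHk.
  - replace (IZR (Z.pred k)) with (IZR k - 1) by (unfold Z.pred; rewrite plus_IZR; simpl; ring).
    replace (a + 2 * PI * (IZR k - 1)) with ((a - 2 * PI) + 2 * PI * IZR k) by ring.
    rewrite IHk. rewrite <- (Hg (a - 2 * PI)). f_equal; ring.
Qed.

Lemma per_pair (g : pt -> pt) : periodic g -> forall p k1 k2, g (padd p (zv k1 k2)) = g p.
Proof.
  intros Hg [p1 p2] k1 k2. unfold padd, zv; simpl.
  rewrite (per1_Zt (fun y => g (y, p2 + 2 * PI * IZR k2))) by (intros a; exact (proj1 (Hg (a, p2 + 2 * PI * IZR k2)))).
  apply (per1_Zt (fun y => g (p1, y))). intros b; exact (proj2 (Hg (p1, b))).
Qed.

Lemma locally_R (P : R -> Prop) x rho : 0 < rho -> (forall y, Rabs (y - x) < rho -> P y) -> locally x P.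
Proof.
  intros Hr H. exists (mkposreal rho Hr). intros y Hy. apply H. exact Hy.
Qed.

Lemma ust_per a1 a2 a3 a4 S p k1 k2 u :
  ustar_sh a1 a2 a3 a4 S (padd p (zv k1 k2)) u = ustar_sh a1 a2 a3 a4 S p u.
Proof.
  rewrite !ust_form. unfold ph1, ph2, padd, zv; simpl.
  assert (Hc : forall s k y, cos (y + 2 * PI * IZR k - s) = cos (y - s)).
  { intros s k y. replace (y + 2 * PI * IZR k - s) with ((y - s) + 2 * PI * IZR k) by ring.
    apply (per1_Zt (fun z => cos z)). intros a. rewrite <- (cos_period a 1). f_equal. simpl. ring. }
  assert (Hs : forall s k y, sin (y + 2 * PI * IZR k - s) = sin (y - s)).
  { intros s k y. replace (y + 2 * PI * IZR k - s) with ((y - s) + 2 * PI * IZR k) by ring.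
    apply (per1_Zt (fun z => sin z)). intros a. rewrite <- (sin_period a 1). f_equal. simpl. ring. }
  rewrite !Hc, !Hs. reflexivity.
Qed.

Lemma teq_of p q k1 k2 : p = padd q (zv k1 k2) -> teq p q.
Proof. intros E. subst p. exists k1, k2. unfold padd, zv; simpl. split; ring. Qed.

Lemma padd_psub a b : padd (psub a b) b = a.
Proof. destruct a, b; unfold padd, psub; simpl; f_equal; ring. Qed.
Lemma pair_zv a b m1 m2 : fst a = fst b + 2 * PI * IZR m1 -> snd a = snd b + 2 * PI * IZR m2 ->
  a = padd b (zv m1 m2).
Proof. destruct a, b; unfold padd, zv; simpl; intros; f_equal; auto. Qed.

Section Final.
Variables (M : nat) (t0 : R) (ybar : pt -> R -> pt) (chi : pt -> R) (a1 a2 a3 a4 : R -> R) (Sh : nat -> pt).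
Variables (Phi_y Phi_U : pt -> R -> R -> pt) (Phi_chi Phi_ust : pt -> pt -> R -> R -> pt).
Variables (c : nat -> pt) (c0 : pt) (L r : R) (mu : pt -> R).
Hypothesis Ht0 : 0 < t0.
Hypothesis Hy_smooth : smooth_vf ybar.
Hypothesis Hy_per : forall t, periodic (fun x => ybar x t).
Hypothesis Hy_supp : exists e, 0 < e /\ forall x t, (t <= e \/ 1 - e <= t) -> ybar x t = pzero.
Hypothesis Hy_vanish : forall i, (1 <= i <= M)%nat -> forall x t,
     t_a M t0 i <= t <= t_b M t0 i -> ybar x t = pzero.
Hypothesis Hy_odd : forall i, (1 <= i <= M)%nat -> forall x tau,
     t_c M t0 (i - 1) <= (t_c M t0 (i - 1) + t_c M t0 i) / 2 - tau ->
     (t_c M t0 (i - 1) + t_c M t0 i) / 2 + tau <= t_c M t0 i ->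
     ybar x ((t_c M t0 (i - 1) + t_c M t0 i) / 2 + tau)
     = pneg (ybar x ((t_c M t0 (i - 1) + t_c M t0 i) / 2 - tau)).
Hypothesis Ha_cont : forall t, continuous a1 t /\ continuous a2 t /\ continuous a3 t /\ continuous a4 t.
Hypothesis Ha_rev : forall t, 0 <= t <= Tstar M ->
     a1 (Tstar M - t) = - a1 t /\ a2 (Tstar M - t) = - a2 t /\
     a3 (Tstar M - t) = - a3 t /\ a4 (Tstar M - t) = - a4 t.
Hypothesis Hchi_smooth : smooth_sp chi.
Hypothesis Hchi_per : periodic chi.
Hypothesis Hy_flow : IsFlowOn (fun _ => True) ybar Phi_y.
Hypothesis HU_flow : IsFlowOn (fun _ => True) (Ubar M t0 ybar chi a1 a2 a3 a4 Sh) Phi_U.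
Hypothesis Hchi_flow : forall S, IsFlowOn (fun t => 0 <= t <= Tstar M)
                           (chiu_sh chi a1 a2 a3 a4 S) (Phi_chi S).
Hypothesis Hust_flow : forall S, IsFlowOn (fun t => 0 <= t <= Tstar M)
                           (ustar_sh a1 a2 a3 a4 S) (Phi_ust S).
Hypothesis Hr : 0 < r < L.
Hypothesis Hr_chi : forall x, nbhd (tsq c0 L) r x -> chi x = 1.
Hypothesis Hr_flows : forall S x s t, supp mu x -> 0 <= s <= Tstar M -> 0 <= t <= Tstar M ->
     nbhd (tsq c0 L) r (Phi_chi S x s t) /\ nbhd (tsq c0 L) r (Phi_ust S x s t).
Hypothesis HOshift : forall i, (1 <= i <= M)%nat ->
     forall x, tsq c0 L x <-> tsq (c i) L (psub x (Sh i)).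
Hypothesis Hy_shift : forall i, (1 <= i <= M)%nat -> forall x,
     nbhd (tsq (c i) L) L x -> forall t, t_a M t0 i <= t <= t_b M t0 i ->
     teq (Phi_y x 0 t) (padd x (Sh i)).

Let U := Ubar M t0 ybar chi a1 a2 a3 a4 Sh.
Let T := Tstar M.
Let ULip := U_LipBd M t0 ybar chi a1 a2 a3 a4 Sh Hy_smooth Hy_per Hy_supp Ha_cont Hchi_smooth Hchi_per.
Let YLip := yb_LipBd ybar Hy_smooth Hy_per Hy_supp.
Let Ugap := U_gap M t0 ybar chi a1 a2 a3 a4 Sh.
Let Ubump := U_bump M t0 ybar chi a1 a2 a3 a4 Sh Hy_vanish.
Let Uodd := U_odd M t0 ybar chi a1 a2 a3 a4 Sh Hy_odd Ha_rev Hchi_smooth.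

Lemma SolX x a b : Sol U (Phi_U x 0) a b.
Proof. apply (flow_Sol (fun _ => True)); auto. Qed.
Lemma SolY x a b : Sol ybar (Phi_y x 0) a b.
Proof. apply (flow_Sol (fun _ => True)); auto. Qed.

Lemma yb_odd j p th : (1 <= j <= M)%nat -> 0 < th < 3 * T / 2 ->
  ybar p (t_a M t0 j + T / 2 + th) = pneg (ybar p (t_a M t0 j + T / 2 - th)).
Proof.
  intros Hj Hth. pose proof (T_pos M).
  pose proof (Hy_odd j Hj p th) as Ho. rewrite (mid_eq M t0 j) in Ho by lia.
  apply Ho; rewrite ?tc_pred by lia; unfold t_c, T in *; unfold t_a in *; lra.
Qed.

Lemma gap_j j u : (1 <= j)%nat -> t_a M t0 j - T < u < t_a M t0 j ->
  forall k, (1 <= k <= M)%nat -> ~ (t_a M t0 k <= u <= t_b M t0 k).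
Proof.
  intros Hj Hu k Hk. pose proof (T_pos M).
  destruct (Nat.lt_ge_cases k j) as [Hlt|Hge].
  - pose proof (ta_lt M t0 k j Hlt). unfold t_b, T in *. unfold t_a in *. lra.
  - destruct (Nat.eq_dec k j) as [E|E]; [subst; lra|].
    assert (Hlt : (j < k)%nat) by lia. pose proof (ta_lt M t0 j k Hlt). unfold T in *. lra.
Qed.

Lemma gap_0 u : u < t_a M t0 1 ->
  forall k, (1 <= k <= M)%nat -> ~ (t_a M t0 k <= u <= t_b M t0 k).
Proof.
  intros Hu k Hk. pose proof (T_pos M).
  destruct (Nat.eq_dec k 1) as [E|E]; [subst; lra|].
  assert (Hlt : (1 < k)%nat) by lia. pose proof (ta_lt M t0 1 k Hlt). lra.
Qed.

Lemma rev_X x J : (1 <= J <= M)%nat ->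
  Phi_U x 0 (t_a M t0 J + 2 * T) = Phi_U x 0 (t_a M t0 J - T).
Proof.
  intros HJ. pose proof (T_pos M).
  pose proof (reversal U (Phi_U x 0) (t_a M t0 J + T / 2) (3 * T / 2)) as R.
  replace (t_a M t0 J + 2 * T) with (t_a M t0 J + T / 2 + 3 * T / 2) by field.
  replace (t_a M t0 J - T) with (t_a M t0 J + T / 2 - 3 * T / 2) by field.
  apply R. unfold T; lra. apply ULip. apply SolX.
  intros p th Hth. apply Uodd; auto.
Qed.

Lemma rev_Y x J : (1 <= J <= M)%nat ->
  Phi_y x 0 (t_a M t0 J + 2 * T) = Phi_y x 0 (t_a M t0 J - T).
Proof.
  intros HJ. pose proof (T_pos M).
  pose proof (reversal ybar (Phi_y x 0) (t_a M t0 J + T / 2) (3 * T / 2)) as R.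
  replace (t_a M t0 J + 2 * T) with (t_a M t0 J + T / 2 + 3 * T / 2) by field.
  replace (t_a M t0 J - T) with (t_a M t0 J + T / 2 - 3 * T / 2) by field.
  apply R. unfold T; lra. apply YLip. apply SolY.
  intros p th Hth. apply yb_odd; auto.
Qed.

Lemma XY_C x j : (1 <= j <= M)%nat -> Phi_U x 0 (t_a M t0 j - T) = Phi_y x 0 (t_a M t0 j - T).
Proof.
  pose proof (T_pos M) as HT.
  induction j as [|j IH]; intros Hj; [lia|].
  destruct j as [|j'].
  - apply (uniq ybar (Phi_U x 0) (Phi_y x 0) 0 (t_a M t0 1)) with (s0 := 0).
    + apply YLip.
    + apply Sol_ext with U; [apply SolX|]. intros u Hu. apply Ugap. apply gap_0. lra.
    + apply SolY.
    + unfold t_a; simpl; unfold T in *; lra.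
    + unfold t_a; simpl; unfold T in *; lra.
    + rewrite (flow_init (fun _ => True) U Phi_U x 0 HU_flow I).
      rewrite (flow_init (fun _ => True) ybar Phi_y x 0 Hy_flow I). reflexivity.
  - set (J := S j') in *.
    assert (E : t_a M t0 (S J) - T = t_a M t0 J + 2 * T) by (unfold t_a, J, T; rewrite !S_INR; ring).
    rewrite E, rev_X, rev_Y by lia. apply IH. lia.
Qed.

Lemma agree x i : (1 <= i <= M)%nat -> Phi_U x 0 (t_a M t0 i) = Phi_y x 0 (t_a M t0 i).
Proof.
  intros Hi. pose proof (T_pos M) as HT.
  apply (uniq ybar (Phi_U x 0) (Phi_y x 0) (t_a M t0 i - T) (t_a M t0 i)) with (s0 := t_a M t0 i - T).
  - apply YLip.
  - apply Sol_ext with U; [apply SolX|]. intros u Hu. apply Ugap. apply (gap_j i); [lia|lra].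
  - apply SolY.
  - unfold T in *; lra.
  - unfold T in *; lra.
  - apply XY_C; auto.
Qed.

Lemma y_shift x k1 k2 t : 0 <= t ->
  Phi_y (padd x (zv k1 k2)) 0 t = padd (Phi_y x 0 t) (zv k1 k2).
Proof.
  intros Ht.
  apply (uniq ybar (Phi_y (padd x (zv k1 k2)) 0) (fun u => padd (Phi_y x 0 u) (zv k1 k2)) 0 t) with (s0 := 0).
  - apply YLip.
  - apply SolY.
  - apply Sol_translate. apply SolY. intros u _. apply (per_pair (fun p => ybar p u) (Hy_per u)).
  - lra.
  - lra.
  - rewrite !(flow_init (fun _ => True) ybar Phi_y _ 0 Hy_flow I). reflexivity.
Qed.

Lemma y_inj p q t : 0 <= t -> Phi_y p 0 t = Phi_y q 0 t -> p = q.
Proof.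
  intros Ht E.
  rewrite <- (flow_init (fun _ => True) ybar Phi_y p 0 Hy_flow I).
  rewrite <- (flow_init (fun _ => True) ybar Phi_y q 0 Hy_flow I).
  apply (uniq ybar (Phi_y p 0) (Phi_y q 0) 0 t) with (s0 := t).
  apply YLip. apply SolY. apply SolY. lra. lra. exact E.
Qed.

Lemma nbO_to_i i p : (1 <= i <= M)%nat -> nbhd (tsq c0 L) r p -> nbhd (tsq (c i) L) r (psub p (Sh i)).
Proof.
  intros Hi [z [Hz Hd]]. exists (psub z (Sh i)). split.
  - apply (HOshift i Hi). exact Hz.
  - unfold eucl, psub in *; simpl in *.
    replace (fst p - fst (Sh i) - (fst z - fst (Sh i))) with (fst p - fst z) by ring.
    replace (snd p - snd (Sh i) - (snd z - snd (Sh i))) with (snd p - snd z) by ring. exact Hd.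
Qed.

Lemma chi_one S p u : nbhd (tsq c0 L) r p ->
  chiu_sh chi a1 a2 a3 a4 S p u = ustar_sh a1 a2 a3 a4 S p u.
Proof.
  intros Hp.
  rewrite chiu_form by (intros; first [apply (chi_exd1 chi Hchi_smooth)|apply (chi_exd2 chi Hchi_smooth)]).
  rewrite ust_form.
  assert (E0 : chi p = 1) by (apply Hr_chi; exact Hp).
  assert (E1 : pd1 chi p = 0).
  { unfold pd1. destruct (nb_open1 _ _ _ Hp) as [rho [Hrho Hy]].
    rewrite (Derive_ext_loc _ (fun _ => 1)). apply Derive_const.
    apply (locally_R _ _ rho Hrho). intros y Hy'. apply Hr_chi. apply Hy. exact Hy'. }
  assert (E2 : pd2 chi p = 0).
  { unfold pd2. destruct (nb_open2 _ _ _ Hp) as [rho [Hrho Hy]].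
    rewrite (Derive_ext_loc _ (fun _ => 1)). apply Derive_const.
    apply (locally_R _ _ rho Hrho). intros y Hy'. apply Hr_chi. apply Hy. exact Hy'. }
  rewrite E0, E1, E2. f_equal; ring.
Qed.


Lemma final x i : (1 <= i <= M)%nat ->
    (exists s, 0 <= s <= Tstar M /\
       (mu (Phi_U x 0 (t_a M t0 i + s)) <> 0 \/
        mu (Phi_ust (Sh i) (padd x (Sh i)) 0 s) <> 0)) ->
    forall t, 0 <= t <= Tstar M ->
      teq (Phi_U x 0 (t_a M t0 i + t)) (Phi_ust (Sh i) (padd x (Sh i)) 0 t).
Proof.
  intros Hi [s [Hs Hmu]] t Ht.
  pose proof (T_pos M) as HT.
  set (S := Sh i) in *.
  set (W := fun u => Phi_U x 0 (t_a M t0 i + u)).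
  set (V := fun u => Phi_ust S (padd x S) 0 u).
  change (teq (W t) (V t)).
  assert (SolW : Sol (chiu_sh chi a1 a2 a3 a4 S) W 0 T).
  { pose proof (Sol_shift U (Phi_U x 0) (t_a M t0 i) (t_a M t0 i + T) (t_a M t0 i) (SolX x _ _)) as H.
    replace (t_a M t0 i - t_a M t0 i) with 0 in H by ring.
    replace (t_a M t0 i + T - t_a M t0 i) with T in H by ring.
    apply Sol_ext with (fun p u => U p (t_a M t0 i + u)); [exact H|].
    intros u Hu. apply Ubump; auto. unfold T in *; lra. }
  assert (SolV : Sol (ustar_sh a1 a2 a3 a4 S) V 0 T).
  { apply (flow_Sol (fun t => 0 <= t <= Tstar M)); auto. unfold T in *; lra. }
  assert (ChiLip : LipBd (chiu_sh chi a1 a2 a3 a4 S) 0 T)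
    by (apply (chiu_LipBd chi Hchi_smooth Hchi_per); auto; unfold T; lra).
  assert (UstLip : LipBd (ustar_sh a1 a2 a3 a4 S) 0 T)
    by (apply ust_LipBd; auto; unfold T; lra).
  assert (HW0 : W 0 = Phi_y x 0 (t_a M t0 i)).
  { unfold W. rewrite Rplus_0_r. apply agree; auto. }
  assert (HV0 : V 0 = padd x S).
  { unfold V. apply (flow_init (fun t => 0 <= t <= Tstar M) _ _ _ _ (Hust_flow S)). lra. }
  assert (Hta : 0 <= t_a M t0 i).
  { destruct (Nat.eq_dec i 1) as [E|E]; [subst i; unfold t_a; simpl; lra|].
    assert (Hlt : (1 < i)%nat) by lia. pose proof (ta_lt M t0 1 i Hlt). unfold t_a in *; simpl in *. lra. }
  assert (Hin : t_a M t0 i <= t_a M t0 i <= t_b M t0 i) by (unfold t_b, t_a; lra).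
  assert (Hsupp : forall z, mu z <> 0 -> supp mu z).
  { intros z Hz e He. exists z. split; auto. unfold eucl, psub.
    replace ((fst (fst z - fst z, snd z - snd z)) ^ 2 + (snd (fst z - fst z, snd z - snd z)) ^ 2) with 0 by (cbn [fst snd]; ring). rewrite sqrt_0. exact He. }
  destruct Hmu as [HmuW|HmuV].
  -
    assert (HWreg : forall u, 0 <= u <= T -> nbhd (tsq c0 L) r (W u)).
    { intros u Hu.
      assert (E : W u = Phi_chi S (W s) s u).
      { apply (uniq (chiu_sh chi a1 a2 a3 a4 S) W (Phi_chi S (W s) s) 0 T) with (s0 := s).
        - assumption.
        - assumption.
        - apply (flow_Sol (fun t => 0 <= t <= Tstar M)). apply Hchi_flow. exact Hs. intros; unfold T in *; lra.
        - unfold T in *; lra.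
        - exact Hu.
        - symmetry. apply (flow_init (fun t => 0 <= t <= Tstar M) _ _ _ _ (Hchi_flow S)). exact Hs. }
      rewrite E. apply (Hr_flows S (W s) s u); auto. }
    assert (Hk : exists k1 k2, W 0 = padd (padd x S) (zv k1 k2)).
    { set (q := psub (W 0) S).
      assert (Hq : nbhd (tsq (c i) L) L q).
      { apply nb_mono with r; [lra|]. apply nbO_to_i; auto. apply HWreg. unfold T in *; lra. }
      destruct (Hy_shift i Hi q Hq (t_a M t0 i) Hin) as [m1 [m2 [E1 E2]]].
      fold S in E1, E2. assert (Eqq : padd q S = W 0) by (unfold q; apply padd_psub). rewrite Eqq, HW0 in E1, E2.
      assert (Eq : Phi_y q 0 (t_a M t0 i) = padd (Phi_y x 0 (t_a M t0 i)) (zv m1 m2))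
        by (apply pair_zv; auto).
      rewrite <- y_shift in Eq by auto.
      apply y_inj in Eq; [|auto].
      exists m1, m2. unfold q in Eq.
      rewrite <- (padd_psub (W 0) S), Eq.
      destruct x, S. unfold padd, zv; simpl. f_equal; ring. }
    destruct Hk as [k1 [k2 Hk]].
    apply teq_of with k1 k2.
    set (W' := fun u => padd (W u) (zv (- k1) (- k2))).
    assert (E : W' t = V t).
    { apply (uniq (ustar_sh a1 a2 a3 a4 S) W' V 0 T) with (s0 := 0).
      - exact UstLip.
      - apply Sol_translate.
        + apply Sol_ext with (chiu_sh chi a1 a2 a3 a4 S); auto.
          intros u Hu. apply chi_one. apply HWreg. lra.
        + intros u _. apply ust_per.
      - exact SolV.
      - unfold T in *; lra.
      - exact Ht.
      - unfold W'. rewrite Hk, HV0. destruct x, S. unfold padd, zv; simpl.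
        rewrite !opp_IZR. f_equal; ring. }
    unfold W' in E. rewrite <- E. destruct (W t). unfold padd, zv; simpl. rewrite !opp_IZR. f_equal; ring.
  -
    assert (HVreg : forall u, 0 <= u <= T -> nbhd (tsq c0 L) r (V u)).
    { intros u Hu.
      assert (E : V u = Phi_ust S (V s) s u).
      { apply (uniq (ustar_sh a1 a2 a3 a4 S) V (Phi_ust S (V s) s) 0 T) with (s0 := s).
        - assumption.
        - assumption.
        - apply (flow_Sol (fun t => 0 <= t <= Tstar M)). apply Hust_flow. exact Hs. intros; unfold T in *; lra.
        - unfold T in *; lra.
        - exact Hu.
        - symmetry. apply (flow_init (fun t => 0 <= t <= Tstar M) _ _ _ _ (Hust_flow S)). exact Hs. }
      rewrite E. apply (Hr_flows S (V s) s u); auto. }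
    assert (Hx : nbhd (tsq (c i) L) L x).
    { apply nb_mono with r; [lra|].
      replace x with (psub (padd x S) S) by (destruct x, S; unfold psub, padd; simpl; f_equal; ring).
      apply nbO_to_i; auto. rewrite <- HV0. apply HVreg. unfold T in *; lra. }
    destruct (Hy_shift i Hi x Hx (t_a M t0 i) Hin) as [k1 [k2 [E1 E2]]].
    assert (Hk : W 0 = padd (padd x S) (zv k1 k2)).
    { rewrite HW0. fold S in E1, E2. apply pair_zv; auto. }
    apply teq_of with k1 k2.
    set (V' := fun u => padd (V u) (zv k1 k2)).
    apply (uniq (chiu_sh chi a1 a2 a3 a4 S) W V' 0 T) with (s0 := 0).
    + exact ChiLip.
    + exact SolW.
    + apply Sol_ext with (ustar_sh a1 a2 a3 a4 S).
      * apply Sol_translate; auto. intros u _. apply ust_per.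
      * intros u Hu. symmetry. apply chi_one. unfold V'. apply nb_per. apply HVreg. lra.
    + unfold T in *; lra.
    + exact Ht.
    + unfold V'. rewrite HV0. exact Hk.
Qed.

End Final.

Theorem lemma3p11
  (omega : pt -> Prop) (M : nat) (L : R) (c : nat -> pt) (c0 : pt) (Sh : nat -> pt)
  (mu chi : pt -> R) (t0 : R) (ybar : pt -> R -> pt) (a1 a2 a3 a4 : R -> R) (r : R)
  (Phi_y Phi_U : pt -> R -> R -> pt)
  (Phi_chi Phi_ust : pt -> pt -> R -> R -> pt)
  (* omega nonempty open subset of T^2 *)
  (Homega_per : periodic omega) (Homega_open : is_open omega)
  (Homega_ne : exists x, omega x)
  (* L > 0 and the covering of T^2 by the squares O_1..O_M of side L *)
  (HM : (1 <= M)%nat) (HL : 0 < L)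
  (Hcover : forall x, exists i, (1 <= i <= M)%nat /\ tsq (c i) L x)
  (* the square O (corner c0, side L) with closure in omega and O = O_i + S_i *)
  (HOomega : forall x, tsq_cl c0 L x -> omega x)
  (HOshift : forall i, (1 <= i <= M)%nat ->
     forall x, tsq c0 L x <-> tsq (c i) L (psub x (Sh i)))
  (* the cutoff mu *)
  (Hmu_smooth : smooth_sp mu) (Hmu_per : periodic mu)
  (Hmu_range : forall x, 0 <= mu x <= 1)
  (Hmu_supp : forall x, supp mu x -> tsq c0 L x)
  (Hmu_sum : forall x, rsum (fun i => mu (padd x (Sh i))) M = 1)
  (* the cutoff chi *)
  (Hchi_smooth : smooth_sp chi) (Hchi_per : periodic chi)
  (Hchi_supp : forall x, supp chi x -> omega x)
  (Hchi_one : exists d, 0 < d /\ forall x, nbhd (tsq_cl c0 L) d x -> chi x = 1)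
  (* the times: t^0_c = t0 < t^1_a < ... < t^M_c < 1 with spacing T^star *)
  (Ht0 : 0 < t0) (Ht1 : t_c M t0 M < 1)
  (* ybar *)
  (Hy_smooth : smooth_vf ybar) (Hy_per : forall t, periodic (fun x => ybar x t))
  (Hy_div : div_free ybar)
  (Hy_supp : exists e, 0 < e /\ forall x t, (t <= e \/ 1 - e <= t) -> ybar x t = pzero)
  (Hy_vanish : forall i, (1 <= i <= M)%nat -> forall x t,
     t_a M t0 i <= t <= t_b M t0 i -> ybar x t = pzero)
  (Hy_flow : IsFlowOn (fun _ => True) ybar Phi_y)
  (Hy_shift : forall i, (1 <= i <= M)%nat -> forall x,
     nbhd (tsq (c i) L) L x -> forall t, t_a M t0 i <= t <= t_b M t0 i ->
     teq (Phi_y x 0 t) (padd x (Sh i)))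
  (Hy_odd : forall i, (1 <= i <= M)%nat -> forall x tau,
     t_c M t0 (i - 1) <= (t_c M t0 (i - 1) + t_c M t0 i) / 2 - tau ->
     (t_c M t0 (i - 1) + t_c M t0 i) / 2 + tau <= t_c M t0 i ->
     ybar x ((t_c M t0 (i - 1) + t_c M t0 i) / 2 + tau)
     = pneg (ybar x ((t_c M t0 (i - 1) + t_c M t0 i) / 2 - tau)))
  (* ubar^star = nabla^perp phi^star, phi^star in span{sin x1, sin x2, cos x1, cos x2} *)
  (Ha_cont : forall t, continuous a1 t /\ continuous a2 t /\ continuous a3 t /\ continuous a4 t)
  (Ha_rev : forall t, 0 <= t <= Tstar M ->
     a1 (Tstar M - t) = - a1 t /\ a2 (Tstar M - t) = - a2 t /\
     a3 (Tstar M - t) = - a3 t /\ a4 (Tstar M - t) = - a4 t)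
  (* the flows on [0, T^star] of nabla^perp[chi phi^star(. - S, .)] and ubar^star(. - S, .) *)
  (Hchi_flow : forall S, IsFlowOn (fun t => 0 <= t <= Tstar M)
                           (chiu_sh chi a1 a2 a3 a4 S) (Phi_chi S))
  (Hust_flow : forall S, IsFlowOn (fun t => 0 <= t <= Tstar M)
                           (ustar_sh a1 a2 a3 a4 S) (Phi_ust S))
  (* the radius r *)
  (Hr : 0 < r < L)
  (Hr_chi : forall x, nbhd (tsq c0 L) r x -> chi x = 1)
  (Hr_flows : forall S x s t, supp mu x -> 0 <= s <= Tstar M -> 0 <= t <= Tstar M ->
     nbhd (tsq c0 L) r (Phi_chi S x s t) /\ nbhd (tsq c0 L) r (Phi_ust S x s t))
  (* the flow of Ubar *)
  (HU_flow : IsFlowOn (fun _ => True) (Ubar M t0 ybar chi a1 a2 a3 a4 Sh) Phi_U) :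
  forall (x : pt) (i : nat), (1 <= i <= M)%nat ->
    (exists s, 0 <= s <= Tstar M /\
       (mu (Phi_U x 0 (t_a M t0 i + s)) <> 0 \/
        mu (Phi_ust (Sh i) (padd x (Sh i)) 0 s) <> 0)) ->
    forall t, 0 <= t <= Tstar M ->
      teq (Phi_U x 0 (t_a M t0 i + t)) (Phi_ust (Sh i) (padd x (Sh i)) 0 t).
Proof.
  intros x i Hi Hex t Ht.
  exact (final M t0 ybar chi a1 a2 a3 a4 Sh Phi_y Phi_U Phi_chi Phi_ust c c0 L r mu Ht0 Hy_smooth Hy_per Hy_supp
    Hy_vanish Hy_odd Ha_cont Ha_rev Hchi_smooth Hchi_per Hy_flow HU_flow Hchi_flow Hust_flow Hr
    Hr_chi Hr_flows HOshift Hy_shift x i Hi Hex t Ht).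
Qed.
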